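(* Let $N\ge 2$ and let $\mathcal G$ be a connected undirected graph on $\{1,\dots,N\}$ with positive edge weights $b_{ij}$, with weighted Laplacian $L_B$ having eigenvalues $0=\lambda_1<\lambda_2\le\dots\le\lambda_N$. Let $m,\tau,k,\alpha,\gamma>0$. Then the systems $H_{\mathrm{std}}$ and $H_{\mathrm{DAPI}}$ (defined in the context) have finite $\mathcal H_2$ norms given by $$\|H_{\mathrm{std}}\|_2^2=\frac{\alpha}{2m}(N-1),$$ $$\|H_{\mathrm{DAPI}}\|_2^2=\frac{\alpha}{2m}\sum_{n=2}^N \frac{1}{1+\dfrac{\gamma\tau\lambda_n+k}{\gamma\lambda_n(\gamma\tau\lambda_n+k)+k^2 m\lambda_n}}.$$
   Context: $L_B$ is the weighted graph Laplacian: $(L_B)_{ii}=\sum_{j\sim i} b_{ij}$, $(L_B)_{ij}=-b_{ij}$ if $i\sim j$, $i\neq j$, and $0$ otherwise. Set $L_G=\alpha L_B$ (conductance Laplacian, uniform resistance-to-reactance ratio $\alpha$) and $L_C=\gamma L_B$ (communication Laplacian); $L_G^{1/2}$ is the unique positive semidefinite square root of $L_G$. $I$ is the $N\times N$ identity. Standard droop control system $H_{\mathrm{std}}$: state $(\theta,\omega)\in\mathbb R^{2N}$, input $w\in\mathbb R^N$, output $y\in\mathbb R^N$, $\dot\theta=\omega$, $\dot\omega=-\tfrac{m}{\tau}L_B\theta-\tfrac1\tau\omega+\tfrac1\tau w$, $y=L_G^{1/2}\theta$; i.e. $A_{\mathrm{std}}=\begin{bmatrix}0&I\\-\frac m\tau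 L_B&-\frac1\tau I\end{bmatrix}$, $B_{\mathrm{std}}=\begin{bmatrix}0\\ \frac1\tau I\end{bmatrix}$, $C_{\mathrm{std}}=\begin{bmatrix}L_G^{1/2}&0\end{bmatrix}$. Distributed averaging PI (DAPI) system $H_{\mathrm{DAPI}}$: state $(\theta,\omega,\Omega)\in\mathbb R^{3N}$, $\dot\theta=\omega$, $\dot\omega=-\tfrac m\tau L_B\theta-\tfrac1\tau\omega+\tfrac1\tau\Omega+\tfrac1\tau w$, $\dot\Omega=-\tfrac1k\omega-\tfrac1k L_C\Omega$, $y=L_G^{1/2}\theta$; i.e. $A_{\mathrm{DAPI}}=\begin{bmatrix}0&I&0\\-\frac m\tau L_B&-\frac1\tau I&\frac1\tau I\\0&-\frac1k I&-\frac1k L_C\end{bmatrix}$, $B_{\mathrm{DAPI}}=\begin{bmatrix}0\\\frac1\tau I\\0\end{bmatrix}$, $C_{\mathrm{DAPI}}=\begin{bmatrix}L_G^{1/2}&0&0\end{bmatrix}$. For a system $(A,B,C)$, $\|H\|_2^2:=\int_0^\infty \operatorname{tr}\big(Ce^{At}BB^Te^{A^Tt}C^T\big)\,dt$ (the zero mode of $L_B$ is unobservable from $y$). This quantity equals the steady-state expected value $\lim_{t\to\infty}\mathbb E[y^Ty]$ under unit white-noise input $w$, interpreted as expected transient resistive power loss $\theta^TL_G\theta$. *)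

(* Defs.v *)
From Stdlib Require Import Reals Lra Lia Arith ClassicalEpsilon.
Open Scope R_scope.

Fixpoint rsum (n : nat) (f : nat -> R) : R :=
  match n with O => 0 | S n' => rsum n' f + f n' end.

Definition Mat := nat -> nat -> R.

Definition mmul (k : nat) (A B : Mat) : Mat :=
  fun i j => rsum k (fun l => A i l * B l j).
Definition mtr (A : Mat) : Mat := fun i j => A j i.
Definition mid : Mat := fun i j => if Nat.eqb i j then 1 else 0.
Definition mscale (c : R) (A : Mat) : Mat := fun i j => c * A i j.
Definition mzero : Mat := fun _ _ => 0.
Definition trace (n : nat) (A : Mat) : R := rsum n (fun i => A i i).

Definition meq (n m : nat) (A B : Mat) : Prop :=
  forall i j, (i < n)%nat -> (j < m)%nat -> A i j = B i j.

Fixpoint mpow (n : nat) (A : Mat) (k : nat) : Mat :=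
  match k with O => mid | S k' => mmul n A (mpow n A k') end.

(* limit of a real sequence (chosen by classical choice; the true limit when it converges) *)
Definition lim (u : nat -> R) : R :=
  epsilon (inhabits 0) (fun l => Un_cv u l).

Definition mexp (n : nat) (A : Mat) (t : R) : Mat :=
  fun i j => lim (fun K => sum_f_R0 (fun k => t ^ k / INR (fact k) * mpow n A k i j) K).

Definition msym (n : nat) (A : Mat) : Prop := meq n n A (mtr A).
Definition mpsd (n : nat) (A : Mat) : Prop :=
  msym n A /\ forall x : nat -> R, 0 <= rsum n (fun i => rsum n (fun j => x i * A i j * x j)).

(* the positive semidefinite square root (unique when A is PSD) *)
Definition msqrt (n : nat) (A : Mat) : Mat :=
  epsilon (inhabits mzero) (fun S => mpsd n S /\ meq n n (mmul n S S) A).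

Definition improper_int_0_inf (f : R -> R) (l : R) : Prop :=
  (forall T, 0 <= T -> exists pr : Riemann_integrable f 0 T, True) /\
  forall eps, 0 < eps -> exists T0, forall T (pr : Riemann_integrable f 0 T),
      T0 <= T -> Rabs (RiemannInt pr - l) < eps.

(* ||H||_2^2 = v  (finite) for the system (A,B,C) with state dim n, input dim p, output dim q *)
Definition H2sq_is (n p q : nat) (A B C : Mat) (v : R) : Prop :=
  improper_int_0_inf
    (fun t => trace q
       (mmul n (mmul p (mmul n (mmul n C (mexp n A t)) B) (mtr B))
               (mmul n (mexp n (mtr A) t) (mtr C)))) v.

(* block matrix with N x N blocks: F bi bj is the (bi,bj) block *)
Definition blk (N : nat) (F : nat -> nat -> Mat) : Mat :=
  fun i j => F (Nat.div i N) (Nat.div j N) (Nat.modulo i N) (Nat.modulo j N).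

(* weighted graph Laplacian on {0..N-1}; b i j > 0 iff i ~ j (i <> j) *)
Definition lap (N : nat) (b : Mat) : Mat :=
  fun i j => if Nat.eqb i j then rsum N (fun l => if Nat.eqb l i then 0 else b i l)
             else - b i j.

Inductive reach (N : nat) (b : Mat) (i : nat) : nat -> Prop :=
| reach_refl : reach N b i i
| reach_step : forall j k, reach N b i j -> (j < N)%nat -> (k < N)%nat -> j <> k ->
    0 < b j k -> reach N b i k.

Definition connected (N : nat) (b : Mat) : Prop :=
  forall i j, (i < N)%nat -> (j < N)%nat -> reach N b i j.

Definition mdiag (d : nat -> R) : Mat := fun i j => if Nat.eqb i j then d i else 0.

(* lam 0, ..., lam (N-1) are the eigenvalues (with multiplicity) of the symmetric matrix L *)
Definition sym_eigenvalues (N : nat) (L : Mat) (lam : nat -> R) : Prop :=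
  exists U : Mat, meq N N (mmul N (mtr U) U) mid /\
                  meq N N L (mmul N (mmul N U (mdiag lam)) (mtr U)).

Definition A_std (N : nat) (m tau : R) (LB : Mat) : Mat :=
  blk N (fun bi bj => match bi, bj with
    | 0, 1 => mid
    | 1, 0 => mscale (- (m / tau)) LB
    | 1, 1 => mscale (- (1 / tau)) mid
    | _, _ => mzero end)%nat.
Definition B_std (N : nat) (tau : R) : Mat :=
  blk N (fun bi bj => match bi, bj with
    | 1, 0 => mscale (1 / tau) mid
    | _, _ => mzero end)%nat.
Definition C_std (N : nat) (LG : Mat) : Mat :=
  blk N (fun bi bj => match bi, bj with
    | 0, 0 => msqrt N LG
    | _, _ => mzero end)%nat.

Definition A_dapi (N : nat) (m tau k : R) (LB LC : Mat) : Mat :=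
  blk N (fun bi bj => match bi, bj with
    | 0, 1 => mid
    | 1, 0 => mscale (- (m / tau)) LB
    | 1, 1 => mscale (- (1 / tau)) mid
    | 1, 2 => mscale (1 / tau) mid
    | 2, 1 => mscale (- (1 / k)) mid
    | 2, 2 => mscale (- (1 / k)) LC
    | _, _ => mzero end)%nat.
Definition B_dapi (N : nat) (tau : R) : Mat :=
  blk N (fun bi bj => match bi, bj with
    | 1, 0 => mscale (1 / tau) mid
    | _, _ => mzero end)%nat.
Definition C_dapi (N : nat) (LG : Mat) : Mat :=
  blk N (fun bi bj => match bi, bj with
    | 0, 0 => msqrt N LG
    | _, _ => mzero end)%nat.

(* Main.v *)
Require Import Defs.
From Stdlib Require Import Reals Lra Lia Arith Psatz ClassicalEpsilon FunctionalExtensionality.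
From Coquelicot Require Import Coquelicot.
Open Scope R_scope.

Lemma rsum_ext n f g : (forall i, (i < n)%nat -> f i = g i) -> rsum n f = rsum n g.
Proof. induction n; simpl; intros H; auto. rewrite IHn by (intros; apply H; lia). rewrite H by lia; auto. Qed.

Lemma rsum_plus n f g : rsum n (fun i => f i + g i) = rsum n f + rsum n g.
Proof. induction n; simpl; [lra|]. rewrite IHn; lra. Qed.

Lemma rsum_scal_l n c f : rsum n (fun i => c * f i) = c * rsum n f.
Proof. induction n; simpl; [lra|]. rewrite IHn; lra. Qed.

Lemma rsum_scal_r n c f : rsum n (fun i => f i * c) = rsum n f * c.
Proof. induction n; simpl; [lra|]. rewrite IHn; lra. Qed.

Lemma rsum_zero n f : (forall i, (i < n)%nat -> f i = 0) -> rsum n f = 0.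
Proof. intros H; rewrite (rsum_ext n f (fun _ => 0)) by auto. induction n; simpl; [lra|]. rewrite IHn; [lra|]. intros; auto. Qed.

Lemma rsum_opp n f : rsum n (fun i => - f i) = - rsum n f.
Proof. induction n; simpl; [lra|]. rewrite IHn; lra. Qed.

Lemma rsum_swap n m f : rsum n (fun i => rsum m (fun j => f i j)) = rsum m (fun j => rsum n (fun i => f i j)).
Proof. induction n; simpl. - symmetry; apply rsum_zero; auto. - rewrite IHn, <- rsum_plus. reflexivity. Qed.

Lemma rsum_add n m f : rsum (n + m) f = rsum n f + rsum m (fun i => f (n + i)%nat).
Proof. induction m; simpl. - rewrite Nat.add_0_r; lra. - rewrite Nat.add_succ_r; simpl; rewrite IHm; lra. Qed.

Lemma rsum_delta n i c : (i < n)%nat ->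
  rsum n (fun j => if Nat.eqb j i then c else 0) = c.
Proof.
  induction n; intros Hi; [lia|]. simpl.
  destruct (Nat.eq_dec i n) as [->|Hne].
  - rewrite Nat.eqb_refl. rewrite rsum_zero; [lra|]. intros j Hj. destruct (Nat.eqb_spec j n); [lia|auto].
  - rewrite IHn by lia. destruct (Nat.eqb_spec n i); [lia|lra].
Qed.

Lemma rsum_mid_l n i (f : nat -> R) : (i < n)%nat -> rsum n (fun j => mid i j * f j) = f i.
Proof.
  intros Hi. rewrite (rsum_ext n _ (fun j => if Nat.eqb j i then f i else 0)).
  - apply rsum_delta; auto.
  - intros j Hj. unfold mid. destruct (Nat.eqb_spec i j), (Nat.eqb_spec j i); subst; try lia; lra.
Qed.

Lemma rsum_mid_r n i (f : nat -> R) : (i < n)%nat -> rsum n (fun j => f j * mid j i) = f i.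
Proof.
  intros Hi. rewrite (rsum_ext n _ (fun j => if Nat.eqb j i then f i else 0)).
  - apply rsum_delta; auto.
  - intros j Hj. unfold mid. destruct (Nat.eqb_spec j i); subst; lra.
Qed.

Lemma rsum_le n f g : (forall i, (i < n)%nat -> f i <= g i) -> rsum n f <= rsum n g.
Proof. induction n; simpl; intros H; [lra|]. pose proof (H n ltac:(lia)). pose proof (IHn ltac:(intros; apply H; lia)). lra. Qed.

Lemma rsum_nonneg n f : (forall i, (i < n)%nat -> 0 <= f i) -> 0 <= rsum n f.
Proof. intros H. rewrite <- (rsum_zero n (fun _ => 0)) by auto. apply rsum_le; auto. Qed.

Lemma rsum_abs n f : Rabs (rsum n f) <= rsum n (fun i => Rabs (f i)).
Proof. induction n; simpl. - rewrite Rabs_R0; lra. - eapply Rle_trans; [apply Rabs_triang|]. lra. Qed.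

Lemma rsum_elem_le n f i : (forall j, (j < n)%nat -> 0 <= f j) -> (i < n)%nat -> f i <= rsum n f.
Proof.
  induction n; intros H Hi; [lia|]. simpl.
  destruct (Nat.eq_dec i n) as [->|]. - pose proof (rsum_nonneg n f ltac:(intros; apply H; lia)); lra.
  - pose proof (IHn ltac:(intros; apply H; lia) ltac:(lia)). pose proof (H n ltac:(lia)). lra.
Qed.

Definition mnorm n (A : Mat) := rsum n (fun i => rsum n (fun l => Rabs (A i l))).

Lemma mnorm_nonneg n A : 0 <= mnorm n A.
Proof. apply rsum_nonneg; intros; apply rsum_nonneg; intros; apply Rabs_pos. Qed.

Lemma mpow_bound n A k i j : (i < n)%nat -> (j < n)%nat -> Rabs (mpow n A k i j) <= (mnorm n A) ^ k.
Proof.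
  revert i j. induction k; intros i j Hi Hj; simpl.
  - unfold mid. destruct (Nat.eqb i j); rewrite ?Rabs_R1, ?Rabs_R0; lra.
  - unfold mmul. eapply Rle_trans; [apply rsum_abs|].
    eapply Rle_trans with (rsum n (fun l => Rabs (A i l) * mnorm n A ^ k)).
    + apply rsum_le; intros l Hl. rewrite Rabs_mult. apply Rmult_le_compat_l; [apply Rabs_pos|]. apply IHk; auto.
    + rewrite rsum_scal_r. apply Rmult_le_compat_r; [apply pow_le, mnorm_nonneg|].
      unfold mnorm. apply (rsum_elem_le n (fun i => rsum n (fun l => Rabs (A i l)))); auto.
      intros; apply rsum_nonneg; intros; apply Rabs_pos.
Qed.

Definition mcoef n A i j (k : nat) : R := mpow n A k i j / INR (fact k).

Lemma mcoef_disk n A i j r : (i < n)%nat -> (j < n)%nat -> CV_disk (mcoef n A i j) r.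
Proof.
  intros Hi Hj. unfold CV_disk.
  apply (@ex_series_le R_AbsRing R_CompleteNormedModule _ (fun k => / INR (fact k) * (mnorm n A * Rabs r) ^ k)).
  - intros k. change norm with Rabs. rewrite Rabs_Rabsolu. unfold mcoef. change (Rabs (mpow n A k i j / INR (fact k) * r ^ k) <= / INR (fact k) * (mnorm n A * Rabs r) ^ k).
    rewrite Rabs_mult, Rpow_mult_distr, <- RPow_abs.
    unfold Rdiv. rewrite Rabs_mult. rewrite (Rabs_right (/ INR (fact k))).
    2: { apply Rle_ge, Rlt_le, Rinv_0_lt_compat, INR_fact_lt_0. }
    rewrite <- !Rmult_assoc. apply Rmult_le_compat_r; [apply pow_le, Rabs_pos|].
    rewrite (Rmult_comm _ (/ _)). apply Rmult_le_compat_l.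
    + apply Rlt_le, Rinv_0_lt_compat, INR_fact_lt_0.
    + apply mpow_bound; auto.
  - exists (exp (mnorm n A * Rabs r)). pose proof (is_exp_Reals (mnorm n A * Rabs r)) as H.
    unfold is_pseries in H. eapply is_series_ext; [|exact H]. intros k. simpl.
    rewrite pow_n_pow. change scal with Rmult. simpl. lra.
Qed.

Lemma mcoef_radius n A i j t : (i < n)%nat -> (j < n)%nat -> Rbar_lt (Rabs t) (CV_radius (mcoef n A i j)).
Proof.
  intros Hi Hj. unfold CV_radius. destruct (Lub_Rbar_correct (CV_disk (mcoef n A i j))) as [Hub _].
  specialize (Hub (Rabs t + 1) (mcoef_disk n A i j _ Hi Hj)).
  destruct (Lub_Rbar (CV_disk (mcoef n A i j))) as [l| |]; simpl in *; try tauto. lra.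
Qed.

Definition psum n A t i j K := sum_f_R0 (fun k => t ^ k / INR (fact k) * mpow n A k i j) K.

Lemma psum_cv n A t i j : (i < n)%nat -> (j < n)%nat ->
  Un_cv (psum n A t i j) (PSeries (mcoef n A i j) t).
Proof.
  intros Hi Hj. apply is_lim_seq_Reals.
  pose proof (PSeries_correct (mcoef n A i j) t (CV_radius_inside _ _ (mcoef_radius n A i j t Hi Hj))) as H.
  unfold is_pseries, is_series in H.
  apply (is_lim_seq_ext (sum_n (fun k => scal (pow_n t k) (mcoef n A i j k)))).
  - intros K. rewrite sum_n_Reals. unfold psum. apply sum_eq. intros k _.
    rewrite pow_n_pow. change scal with Rmult. simpl. unfold mcoef. unfold Rdiv. lra.
  - exact H.
Qed.

Lemma mexp_PSeries n A t i j : (i < n)%nat -> (j < n)%nat -> mexp n A t i j = PSeries (mcoef n A i j) t.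
Proof.
  intros Hi Hj. unfold mexp, lim.
  pose proof (psum_cv n A t i j Hi Hj) as Hcv.
  pose proof (epsilon_spec (inhabits 0) (fun l => Un_cv (psum n A t i j) l) (ex_intro _ _ Hcv)) as Hs.
  eapply UL_sequence; [exact Hs| exact Hcv].
Qed.

Lemma mexp_cv n A t i j : (i < n)%nat -> (j < n)%nat -> Un_cv (psum n A t i j) (mexp n A t i j).
Proof. intros; rewrite mexp_PSeries by auto; apply psum_cv; auto. Qed.

Lemma lim_seq_uniq u (l1 l2 : R) : is_lim_seq u l1 -> is_lim_seq u l2 -> l1 = l2.
Proof. intros H1 H2. apply is_lim_seq_unique in H1, H2. rewrite H1 in H2. congruence. Qed.

Lemma sum_f_rsum K n (f : nat -> nat -> R) :
  sum_f_R0 (fun k => rsum n (fun l => f k l)) K = rsum n (fun l => sum_f_R0 (fun k => f k l) K).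
Proof. induction K; simpl; auto. rewrite IHK, <- rsum_plus. reflexivity. Qed.

Lemma lim_rsum n (c : nat -> R) (u : nat -> nat -> R) (v : nat -> R) :
  (forall l, (l < n)%nat -> is_lim_seq (u l) (v l)) ->
  is_lim_seq (fun K => rsum n (fun l => c l * u l K)) (rsum n (fun l => c l * v l)).
Proof.
  induction n; intros H; simpl.
  - apply is_lim_seq_const.
  - apply is_lim_seq_plus'. + apply IHn; intros; apply H; lia.
    + apply is_lim_seq_mult'. apply is_lim_seq_const. apply H; lia.
Qed.

Lemma mexp_deriv n A t i j : (i < n)%nat -> (j < n)%nat ->
  is_derive (fun s => mexp n A s i j) t (rsum n (fun l => A i l * mexp n A t l j)).
Proof.
  intros Hi Hj.
  apply (is_derive_ext (PSeries (mcoef n A i j))).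
  { intros s. rewrite mexp_PSeries; auto. }
  replace (rsum n (fun l => A i l * mexp n A t l j)) with (PSeries (PS_derive (mcoef n A i j)) t).
  { apply is_derive_PSeries, mcoef_radius; auto. }
  pose proof (PSeries_correct _ _ (ex_pseries_derive _ _ (mcoef_radius n A i j t Hi Hj))) as H.
  unfold is_pseries, is_series in H.
  eapply lim_seq_uniq; [exact H|].
  apply (is_lim_seq_ext (fun K => rsum n (fun l => A i l * psum n A t l j K))).
  - intros K. rewrite sum_n_Reals. unfold psum.
    rewrite (rsum_ext n _ (fun l => sum_f_R0 (fun k => A i l * (t ^ k / INR (fact k) * mpow n A k l j)) K)).
    2:{ intros l Hl. rewrite scal_sum. apply sum_eq; intros; ring. }
    rewrite <- sum_f_rsum. apply sum_eq. intros k _.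
    symmetry. change (scal (pow_n t k) (PS_derive (mcoef n A i j) k)) with (pow_n t k * PS_derive (mcoef n A i j) k).
    replace (pow_n t k) with (t ^ k) by (symmetry; apply pow_n_pow). unfold PS_derive, mcoef.
    change (mpow n A (S k) i j) with (mmul n A (mpow n A k) i j). unfold mmul.
unfold Rdiv. rewrite <- rsum_scal_r, <- rsum_scal_l, <- rsum_scal_l.
    change (fact (S k)) with (S k * fact k)%nat. rewrite mult_INR.
    assert (INR (fact k) <> 0) by (apply not_0_INR, fact_neq_0).
    assert (INR (S k) <> 0) by (apply not_0_INR; lia).
    apply rsum_ext; intros l Hl. field. split; auto.
  - apply lim_rsum. intros l Hl. apply is_lim_seq_Reals, mexp_cv; auto.
Qed.

Lemma mexp_0 n A i j : (i < n)%nat -> (j < n)%nat -> mexp n A 0 i j = mid i j.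
Proof.
  intros Hi Hj. rewrite mexp_PSeries by auto. rewrite PSeries_0. unfold mcoef. simpl. lra.
Qed.

Lemma mmul_assoc n A B C i j : mmul n A (mmul n B C) i j = mmul n (mmul n A B) C i j.
Proof.
  unfold mmul. rewrite (rsum_ext n (fun l => A i l * rsum n (fun m => B l m * C m j))
     (fun l => rsum n (fun m => A i l * B l m * C m j))).
  2:{ intros; rewrite <- rsum_scal_l; apply rsum_ext; intros; ring. }
  rewrite rsum_swap. apply rsum_ext; intros. rewrite <- rsum_scal_r. reflexivity.
Qed.

Lemma mpow_succ_r n A k i j : (i < n)%nat -> (j < n)%nat ->
  mpow n A (S k) i j = mmul n (mpow n A k) A i j.
Proof.
  revert i j; induction k; intros i j Hi Hj.
  - simpl. unfold mmul. rewrite rsum_mid_l by auto. rewrite rsum_mid_r by auto. reflexivity.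
  - change (mpow n A (S (S k)) i j) with (mmul n A (mpow n A (S k)) i j).
    unfold mmul at 1. rewrite (rsum_ext n _ (fun l => A i l * mmul n (mpow n A k) A l j)).
    2:{ intros l Hl. rewrite IHk; auto. }
    change (rsum n (fun l => A i l * mmul n (mpow n A k) A l j)) with (mmul n A (mmul n (mpow n A k) A) i j).
    rewrite mmul_assoc. reflexivity.
Qed.

Lemma mpow_tr n A k i j : (i < n)%nat -> (j < n)%nat -> mpow n (mtr A) k i j = mpow n A k j i.
Proof.
  revert i j; induction k; intros i j Hi Hj.
  - simpl. unfold mid. destruct (Nat.eqb_spec i j), (Nat.eqb_spec j i); subst; try lia; auto.
  - rewrite (mpow_succ_r n A) by auto. change (mpow n (mtr A) (S k) i j) with (mmul n (mtr A) (mpow n (mtr A) k) i j).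
    unfold mmul, mtr. apply rsum_ext; intros l Hl. rewrite IHk by auto. ring.
Qed.

Lemma mexp_tr n A t i j : (i < n)%nat -> (j < n)%nat -> mexp n (mtr A) t i j = mexp n A t j i.
Proof.
  intros Hi Hj. unfold mexp. f_equal. apply functional_extensionality; intros K.
  apply sum_eq; intros k _. rewrite mpow_tr; auto.
Qed.

Lemma is_derive_rsum n (f : nat -> R -> R) df t :
  (forall l, (l < n)%nat -> is_derive (f l) t (df l)) ->
  is_derive (fun s => rsum n (fun l => f l s)) t (rsum n df).
Proof.
  induction n; intros H; simpl.
  - apply (is_derive_const 0).
  - apply (is_derive_plus (fun s => rsum n (fun l => f l s)) (f n)).
    + apply IHn; intros; apply H; lia.
    + apply H; lia.
Qed.

Lemma is_derive_scal_l c f df t : is_derive f t df -> is_derive (fun s => c * f s) t (c * df).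
Proof. intros H. apply (is_derive_scal f t c df H). Qed.

Lemma is_derive_mult' f g df dg t : is_derive f t df -> is_derive g t dg ->
  is_derive (fun s => f s * g s) t (df * g t + f t * dg).
Proof. intros H1 H2. eapply is_derive_ext; [|apply (is_derive_mult f g t df dg H1 H2)]; [reflexivity|]. 
  intros; apply Rmult_comm. Qed.

Lemma is_derive_eqv (f : R -> R) (t l1 l2 : R) : is_derive f t l1 -> l1 = l2 -> is_derive f t l2.
Proof. intros H ->; exact H. Qed.

Lemma is_derive_plus' f g df dg t : is_derive f t df -> is_derive g t dg ->
  is_derive (fun s => f s + g s) t (df + dg).
Proof. intros H1 H2. apply (is_derive_plus f g t df dg H1 H2). Qed.

Definition X n A B (r : nat) t mm := rsum n (fun l => mexp n A t mm l * B l r).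

Lemma X_deriv n A B r t mm : (mm < n)%nat ->
  is_derive (fun s => X n A B r s mm) t (rsum n (fun l => A mm l * X n A B r t l)).
Proof.
  intros Hm. unfold X.
  replace (rsum n (fun l => A mm l * rsum n (fun l0 => mexp n A t l l0 * B l0 r)))
    with (rsum n (fun l => rsum n (fun k => A mm k * mexp n A t k l) * B l r)).
  - apply is_derive_rsum. intros l Hl.
    eapply is_derive_eqv; [eapply is_derive_ext; [|apply (is_derive_scal_l (B l r) _ _ t (mexp_deriv n A t mm l Hm Hl))]|].
    intros s; apply Rmult_comm. apply Rmult_comm.
  - rewrite (rsum_ext n (fun l => A mm l * _) (fun l => rsum n (fun l0 => A mm l * mexp n A t l l0 * B l0 r))).
    2:{ intros; rewrite <- rsum_scal_l; apply rsum_ext; intros; ring. }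
    rewrite rsum_swap. apply rsum_ext; intros. rewrite <- rsum_scal_r. reflexivity.
Qed.

Lemma X_0 n A B r mm : (mm < n)%nat -> X n A B r 0 mm = B mm r.
Proof.
  intros Hm. unfold X. rewrite (rsum_ext n _ (fun l => mid mm l * B l r)).
  - apply (rsum_mid_l n mm (fun l => B l r)); auto.
  - intros; rewrite mexp_0; auto.
Qed.

Lemma integrand_eq n N A B C t :
  trace N (mmul n (mmul N (mmul n (mmul n C (mexp n A t)) B) (mtr B)) (mmul n (mexp n (mtr A) t) (mtr C)))
  = rsum N (fun i => rsum N (fun r => (rsum n (fun mm => C i mm * X n A B r t mm))^2)).
Proof.
  unfold trace. apply rsum_ext; intros i Hi.
  set (Z := fun r => rsum n (fun mm => C i mm * X n A B r t mm)).
  assert (HY : forall r, mmul n (mmul n C (mexp n A t)) B i r = Z r).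
  { intros r. unfold mmul, Z, X.
    rewrite (rsum_ext n (fun mm => C i mm * _) (fun mm => rsum n (fun l => C i mm * mexp n A t mm l * B l r))).
    2:{ intros; rewrite <- rsum_scal_l; apply rsum_ext; intros; ring. }
    rewrite rsum_swap. apply rsum_ext; intros. rewrite <- rsum_scal_r. reflexivity. }
  unfold mmul at 1. unfold mmul at 1.
  rewrite (rsum_ext n _ (fun l => rsum N (fun r => Z r * B l r * rsum n (fun mm => mexp n A t mm l * C i mm)))).
  2:{ intros l Hl. unfold mtr at 1. rewrite <- rsum_scal_r. apply rsum_ext; intros r Hr.
      rewrite HY. unfold mmul. f_equal. apply rsum_ext; intros mm Hmm. rewrite mexp_tr by auto. unfold mtr. ring. }
  rewrite rsum_swap. apply rsum_ext; intros r Hr.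
  rewrite (rsum_ext n _ (fun l => Z r * (B l r * rsum n (fun mm => mexp n A t mm l * C i mm)))) by (intros; ring).
  rewrite rsum_scal_l. simpl. rewrite Rmult_1_r. f_equal.
  unfold Z, X.
  rewrite (rsum_ext n (fun mm => C i mm * _) (fun mm => rsum n (fun l => B l r * (mexp n A t mm l * C i mm)))).
  2:{ intros; rewrite <- rsum_scal_l; apply rsum_ext; intros; ring. }
  rewrite rsum_swap. apply rsum_ext; intros. rewrite <- rsum_scal_l. reflexivity.
Qed.

Lemma rsum_sq n f : (rsum n f) ^ 2 = rsum n (fun m => rsum n (fun l => f m * f l)).
Proof.
  replace ((rsum n f)^2) with (rsum n f * rsum n f) by ring.
  rewrite <- rsum_scal_r. apply rsum_ext; intros. rewrite <- rsum_scal_l. reflexivity.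
Qed.

Lemma L_entry N U lam L i j : meq N N L (mmul N (mmul N U (mdiag lam)) (mtr U)) ->
  (i < N)%nat -> (j < N)%nat -> L i j = rsum N (fun k => U i k * lam k * U j k).
Proof.
  intros HL Hi Hj. rewrite HL by auto. unfold mmul, mtr. apply rsum_ext; intros k Hk.
  f_equal. rewrite (rsum_ext N _ (fun l => if Nat.eqb l k then U i k * lam k else 0)).
  - apply rsum_delta; auto.
  - intros l Hl. unfold mdiag. destruct (Nat.eqb_spec l k); subst; ring.
Qed.

Lemma mid_sym i j : mid i j = mid j i.
Proof. unfold mid. rewrite Nat.eqb_sym. reflexivity. Qed.

Lemma UtU N U n k : meq N N (mmul N (mtr U) U) mid -> (n < N)%nat -> (k < N)%nat ->
  rsum N (fun m => U m n * U m k) = mid n k.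
Proof. intros HU Hn Hk. rewrite <- HU by auto. reflexivity. Qed.

Lemma modal N U lam L n y : meq N N (mmul N (mtr U) U) mid ->
  meq N N L (mmul N (mmul N U (mdiag lam)) (mtr U)) -> (n < N)%nat ->
  rsum N (fun m => U m n * rsum N (fun l => L m l * y l)) = lam n * rsum N (fun l => U l n * y l).
Proof.
  intros HU HL Hn.
  rewrite (rsum_ext N _ (fun m => rsum N (fun l => rsum N (fun k => y l * lam k * U l k * (U m n * U m k))))).
  2:{ intros m Hm. rewrite <- rsum_scal_l. apply rsum_ext; intros l Hl.
      rewrite (L_entry N U lam L m l HL Hm Hl). rewrite <- rsum_scal_r, <- rsum_scal_l. apply rsum_ext; intros; ring. }
  rewrite rsum_swap. rewrite <- rsum_scal_l. apply rsum_ext; intros l Hl.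
  rewrite rsum_swap.
  rewrite (rsum_ext N _ (fun k => y l * lam k * U l k * mid k n)).
  2:{ intros k Hk. rewrite rsum_scal_l. rewrite UtU, mid_sym; auto. }
  rewrite (rsum_mid_r N n (fun k => y l * lam k * U l k)) by auto. ring.
Qed.

Lemma out_quad N U lam L S alpha x : meq N N (mmul N (mtr U) U) mid ->
  meq N N L (mmul N (mmul N U (mdiag lam)) (mtr U)) ->
  msym N S -> meq N N (mmul N S S) (mscale alpha L) ->
  rsum N (fun i => (rsum N (fun m => S i m * x m))^2)
  = alpha * rsum N (fun n => lam n * (rsum N (fun m => U m n * x m))^2).
Proof.
  intros HU HL HS HSS.
  rewrite (rsum_ext N _ (fun i => rsum N (fun m => rsum N (fun l => x m * x l * (S m i * S i l))))).
  2:{ intros i Hi. rewrite rsum_sq. apply rsum_ext; intros m Hm. apply rsum_ext; intros l Hl.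
      rewrite (HS i m) by auto. unfold mtr. ring. }
  rewrite rsum_swap. 
  rewrite (rsum_ext N _ (fun m => rsum N (fun l => x m * x l * (alpha * L m l)))).
  2:{ intros m Hm. rewrite rsum_swap. apply rsum_ext; intros l Hl. rewrite rsum_scal_l.
      f_equal. pose proof (HSS m l Hm Hl) as E. unfold mscale in E. rewrite <- E. reflexivity. }
  rewrite <- rsum_scal_l. symmetry.
  rewrite (rsum_ext N _ (fun n => rsum N (fun m => rsum N (fun l => alpha * (lam n * (U m n * x m) * (U l n * x l)))))).
  2:{ intros n Hn. rewrite rsum_sq, <- rsum_scal_l, <- rsum_scal_l. apply rsum_ext; intros m Hm.
      rewrite <- !rsum_scal_l. apply rsum_ext; intros; ring. }
  rewrite rsum_swap. apply rsum_ext; intros m Hm. rewrite rsum_swap. apply rsum_ext; intros l Hl.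
  rewrite (L_entry N U lam L m l HL Hm Hl). rewrite <- rsum_scal_l, <- rsum_scal_l. apply rsum_ext; intros; ring.
Qed.

Lemma msqrt_spec N U lam L alpha : meq N N (mmul N (mtr U) U) mid ->
  meq N N L (mmul N (mmul N U (mdiag lam)) (mtr U)) -> 0 <= alpha ->
  (forall k, (k < N)%nat -> 0 <= lam k) ->
  mpsd N (msqrt N (mscale alpha L)) /\ meq N N (mmul N (msqrt N (mscale alpha L)) (msqrt N (mscale alpha L))) (mscale alpha L).
Proof.
  intros HU HL Ha Hlam. unfold msqrt. apply (epsilon_spec (inhabits mzero) (fun S => mpsd N S /\ meq N N (mmul N S S) (mscale alpha L))).
  set (s := fun k => sqrt (alpha * lam k)).
  exists (fun i j => rsum N (fun k => U i k * s k * U j k)). split; [split|].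
  - intros i j Hi Hj. unfold mtr. apply rsum_ext; intros; ring.
  - intros x. 
    rewrite (rsum_ext N _ (fun i => rsum N (fun j => rsum N (fun k => s k * (U i k * x i) * (U j k * x j))))).
    2:{ intros i Hi. apply rsum_ext; intros j Hj. rewrite <- rsum_scal_l, <- rsum_scal_r. apply rsum_ext; intros; ring. }
    rewrite (rsum_ext N _ (fun i => rsum N (fun k => rsum N (fun j => s k * (U i k * x i) * (U j k * x j))))).
    2:{ intros; apply rsum_swap. }
    rewrite rsum_swap. apply rsum_nonneg; intros k Hk.
    rewrite (rsum_ext N _ (fun i => s k * ((U i k * x i) * rsum N (fun j => U j k * x j)))).
    2:{ intros i Hi. rewrite <- rsum_scal_l, <- rsum_scal_l. apply rsum_ext; intros; ring. }
    rewrite rsum_scal_l, rsum_scal_r. apply Rmult_le_pos; [apply sqrt_pos|].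
    rewrite <- Rsqr_pow2 || idtac. replace (rsum N (fun j => U j k * x j) * rsum N (fun j => U j k * x j)) with (Rsqr (rsum N (fun j => U j k * x j))) by (unfold Rsqr; ring). apply Rle_0_sqr.
  - intros i j Hi Hj. unfold mmul, mscale.
    rewrite (L_entry N U lam L i j HL Hi Hj). rewrite <- rsum_scal_l.
    rewrite (rsum_ext N _ (fun l => rsum N (fun k => rsum N (fun k' => U i k * s k * U j k' * s k' * (U l k * U l k'))))).
    2:{ intros l Hl. rewrite <- rsum_scal_r. apply rsum_ext; intros k Hk. rewrite <- !rsum_scal_l. apply rsum_ext; intros; ring. }
    rewrite rsum_swap. apply rsum_ext; intros k Hk.
    rewrite rsum_swap.
    rewrite (rsum_ext N _ (fun k' => U i k * s k * U j k' * s k' * mid k' k)).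
    2:{ intros k' Hk'. rewrite rsum_scal_l. rewrite UtU, mid_sym; auto. }
    rewrite (rsum_mid_r N k (fun k' => U i k * s k * U j k' * s k')) by auto.
    assert (s k * s k = alpha * lam k). { unfold s. apply sqrt_sqrt. apply Rmult_le_pos; auto. }
    transitivity (U i k * U j k * (s k * s k)); [ring|]. rewrite H. ring.
Qed.

Lemma nonincr (f df : R -> R) : (forall t, is_derive f t (df t)) -> (forall t, 0 <= t -> df t <= 0) ->
  forall t, 0 <= t -> f t <= f 0.
Proof.
  intros Hd Hn t Ht. destruct (Req_dec t 0) as [->|Hne]; [lra|].
  destruct (MVT_cor3 f df 0 t ltac:(lra)) as [c [H1 [H2 H3]]].
  { intros x _ _. apply is_derive_Reals, Hd. }
  rewrite H3. pose proof (Hn c H1). nra.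
Qed.

Lemma decay_from_lyap (E Phi dE dPhi : R -> R) (kap : R) :
  0 < kap ->
  (forall t, is_derive E t (dE t)) -> (forall t, is_derive Phi t (dPhi t)) ->
  (forall t, dE t <= 0) -> (forall t, dPhi t <= - kap * E t) -> (forall t, 0 <= Phi t) ->
  forall t, 0 < t -> E t <= Phi 0 / kap / t.
Proof.
  intros Hk HE HP HdE HdP HP0 t Ht.
  set (psi := fun s => Phi s + kap * (s * E s)).
  assert (Hpsi : forall s, 0 <= s -> psi s <= psi 0).
  { apply (nonincr psi (fun s => dPhi s + kap * (1 * E s + s * dE s))).
    - intros s. unfold psi. apply (is_derive_plus' Phi (fun s => kap * (s * E s))); [apply HP|].
      apply is_derive_scal_l. apply is_derive_mult'; [|apply HE]. apply (is_derive_id s).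
    - intros s Hs. pose proof (HdP s). pose proof (HdE s). assert (0 <= s * - dE s) by nra. nra. }
  specialize (Hpsi t (Rlt_le _ _ Ht)). unfold psi in Hpsi. rewrite Rmult_0_l, Rmult_0_r, Rplus_0_r in Hpsi.
  pose proof (HP0 t).
  apply (Rmult_le_reg_r (kap * t)). nra.
  replace (Phi 0 / kap / t * (kap * t)) with (Phi 0) by (field; lra). nra.
Qed.

Lemma std_mode (a c : R) (q p : R -> R) : 0 < a -> 0 < c ->
  (forall t, is_derive q t (p t)) -> (forall t, is_derive p t (- a * q t - c * p t)) ->
  exists K, forall t, 0 < t -> q t ^ 2 + p t ^ 2 <= K / t.
Proof.
  intros Ha Hc Hq Hp.
  set (M := (3/2 + c^2/(2*a)) / (2*c) + 1/2 + 1/(2*a)).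
  set (E := fun s => a * (q s * q s) + p s * p s).
  set (Phi := fun s => M * E s + q s * p s).
  assert (HE : forall t, is_derive E t (2 * a * q t * p t + 2 * p t * (- a * q t - c * p t))).
  { intros t. eapply is_derive_eqv. apply (is_derive_plus' (fun s => a * (q s * q s)) (fun s => p s * p s)).
    apply is_derive_scal_l, is_derive_mult'; apply Hq. apply is_derive_mult'; apply Hp. simpl. ring. }
  assert (HPh : forall t, is_derive Phi t (M * (2 * a * q t * p t + 2 * p t * (- a * q t - c * p t)) + (p t * p t + q t * (- a * q t - c * p t)))).
  { intros t. eapply is_derive_eqv. apply (is_derive_plus' (fun s => M * E s) (fun s => q s * p s)).
    apply is_derive_scal_l, HE. apply is_derive_mult'; [apply Hq|apply Hp]. simpl. ring. }
  assert (HM1 : 2 * c * M >= 3/2 + c^2/(2*a)).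
  { unfold M. assert (0 < 1/(2*a)) by (apply Rdiv_lt_0_compat; lra).
    replace (2 * c * ((3 / 2 + c ^ 2 / (2 * a)) / (2 * c) + 1 / 2 + 1 / (2 * a))) with
      (3/2 + c^2/(2*a) + c + 2 * c * (1/(2*a))) by (field; lra). nra. }
  assert (HM2 : M >= 1/2 + 1/(2*a)).
  { unfold M. assert (0 < (3/2 + c^2/(2*a)) / (2*c)).
    { apply Rdiv_lt_0_compat; [|lra]. assert (0 <= c^2/(2*a)) by (unfold Rdiv; apply Rmult_le_pos; [nra| apply Rlt_le, Rinv_0_lt_compat; lra]). lra. } lra. }
  set (ia := / a). assert (Hia : a * ia = 1) by (unfold ia; field; lra). assert (0 < ia) by (unfold ia; apply Rinv_0_lt_compat; lra).
  assert (Hc2 : c^2/(2*a) = c^2 * ia / 2) by (unfold ia; field; lra).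
  assert (HM2' : M >= 1/2 + ia/2) by (replace (ia/2) with (1/(2*a)) by (unfold ia; field; lra); lra).
  assert (Phi_nn : forall t, 0 <= Phi t).
  { intros t. unfold Phi, E. set (x := q t). set (y := p t).
    assert (H1 : 0 <= (a * x + y)^2) by apply pow2_ge_0.
    assert (H2 : 0 <= ia * (a * x + y)^2) by (apply Rmult_le_pos; lra).
    assert (H3 : ia * (a * x + y)^2 = a * (x*x) + 2 * (x*y) + ia * (y*y)).
    { replace (ia * (a*x+y)^2) with ((a*ia) * a * (x*x) + 2 * (a*ia) * (x*y) + ia * (y*y)) by ring. rewrite Hia. ring. }
    assert (0 <= x*x) by nra. assert (0 <= y*y) by nra.
    assert (M * (a*(x*x)) >= (1/2) * (a * (x*x))) by nra.
    assert (M * (y*y) >= (1/2) * (ia * (y*y))) by nra. nra. }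
  assert (Hd : forall t, M * (2 * a * q t * p t + 2 * p t * (- a * q t - c * p t)) + (p t * p t + q t * (- a * q t - c * p t)) <= - (1/2) * E t).
  { intros t. unfold E. set (x := q t). set (y := p t).
    assert (H1 : 0 <= ia * (a * x + c * y)^2) by (apply Rmult_le_pos; [lra|apply pow2_ge_0]).
    assert (H3 : ia * (a * x + c * y)^2 = a * (x*x) + 2 * c * (x*y) + c^2 * ia * (y*y)).
    { replace (ia * (a*x+c*y)^2) with ((a*ia) * a * (x*x) + 2 * c * (a*ia) * (x*y) + c^2 * ia * (y*y)) by ring. rewrite Hia. ring. }
    rewrite Hc2 in HM1. assert (0 <= y*y) by nra.
    assert (2 * c * M * (y*y) >= (3/2 + c^2*ia/2) * (y*y)) by nra. nra. }
  assert (HEd : forall t, 2 * a * q t * p t + 2 * p t * (- a * q t - c * p t) <= 0).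
  { intros t. assert (0 <= p t * p t) by nra. nra. }
  pose proof (decay_from_lyap E Phi _ _ (1/2) ltac:(lra) HE HPh HEd Hd Phi_nn) as Hdec.
  exists ((ia + 1) * (Phi 0 / (1/2))). intros t Ht. specialize (Hdec t Ht).
  unfold E in Hdec. assert (0 <= Phi 0) by apply Phi_nn.
  assert (Hq2 : q t ^ 2 <= ia * (a * (q t * q t))).
  { replace (ia * (a * (q t * q t))) with ((a * ia) * (q t * q t)) by ring. rewrite Hia. nra. }
  assert (0 <= a * (q t * q t)) by nra. assert (0 <= p t * p t) by nra.
  replace ((ia + 1) * (Phi 0 / (1 / 2)) / t) with ((ia + 1) * (Phi 0 / (1/2) / t)) by (field; lra).
  assert (ia * (a * (q t * q t)) <= ia * (Phi 0 / (1/2) / t)) by nra.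
  assert (p t * p t <= Phi 0 / (1/2) / t) by nra. nra.
Qed.

Lemma dapi_mode (a c d g : R) (q p r : R -> R) : 0 < a -> 0 < c -> 0 < d -> 0 < g ->
  (forall t, is_derive q t (p t)) -> (forall t, is_derive p t (- a * q t - c * p t + c * r t)) ->
  (forall t, is_derive r t (- d * p t - g * r t)) ->
  exists K, forall t, 0 < t -> q t ^ 2 + p t ^ 2 + r t ^ 2 <= K / t.
Proof.
  intros Ha Hc Hd Hg Hq Hp Hr.
  set (ia := / a). assert (Hia : a * ia = 1) by (unfold ia; field; lra). assert (0 < ia) by (unfold ia; apply Rinv_0_lt_compat; lra).
  set (w := c / d). assert (Hw : 0 < w) by (unfold w; apply Rdiv_lt_0_compat; lra).
  assert (Hwd : w * d = c) by (unfold w; field; lra).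
  set (iw := / w). assert (Hiw : w * iw = 1) by (unfold iw; field; lra). assert (0 < iw) by (unfold iw; apply Rinv_0_lt_compat; lra).
  set (ic := / c). assert (Hic : c * ic = 1) by (unfold ic; field; lra). assert (0 < ic) by (unfold ic; apply Rinv_0_lt_compat; lra).
  set (iwg := / (w * g)). assert (Hiwg : w * g * iwg = 1) by (unfold iwg; field; split; lra). assert (0 < iwg) by (unfold iwg; apply Rinv_0_lt_compat; nra).
  assert (0 <= c^2 * ia) by (apply Rmult_le_pos; [apply pow2_ge_0|lra]).
  set (M := (3/2 + c^2 * ia) * ic / 2 + (c^2 * ia + w/2) * iwg / 2 + 1/2 + ia/2).
  assert (HM0 : 0 <= (3/2 + c^2 * ia) * ic / 2) by (apply Rmult_le_pos; [apply Rmult_le_pos|]; lra).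
  assert (HM0' : 0 <= (c^2 * ia + w/2) * iwg / 2) by (apply Rmult_le_pos; [apply Rmult_le_pos|]; lra).
  assert (HM1 : 2 * c * M >= 3/2 + c^2 * ia).
  { unfold M. replace (2 * c * ((3/2 + c^2 * ia) * ic / 2 + (c^2 * ia + w/2) * iwg / 2 + 1/2 + ia/2))
      with ((3/2 + c^2*ia) * (c * ic) + 2 * c * ((c^2 * ia + w/2) * iwg / 2 + 1/2 + ia/2)) by field.
    rewrite Hic. assert (0 <= 2 * c * ((c^2 * ia + w/2) * iwg / 2 + 1/2 + ia/2)) by (apply Rmult_le_pos; lra). lra. }
  assert (HM2 : 2 * w * g * M >= c^2 * ia + w/2).
  { unfold M. replace (2 * w * g * ((3/2 + c^2 * ia) * ic / 2 + (c^2 * ia + w/2) * iwg / 2 + 1/2 + ia/2))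
      with ((c^2 * ia + w/2) * (w * g * iwg) + 2 * (w * g) * ((3/2 + c^2 * ia) * ic / 2 + 1/2 + ia/2)) by field.
    rewrite Hiwg. assert (0 <= 2 * (w * g) * ((3/2 + c^2 * ia) * ic / 2 + 1/2 + ia/2)) by (apply Rmult_le_pos; [nra|lra]). lra. }
  assert (HM3 : M >= 1/2 + ia/2) by (unfold M; lra).
  set (E := fun s => a * (q s * q s) + p s * p s + w * (r s * r s)).
  set (Phi := fun s => M * E s + q s * p s).
  set (dE := fun t => 2 * a * q t * p t + 2 * p t * (- a * q t - c * p t + c * r t) + w * (2 * r t * (- d * p t - g * r t))).
  assert (HE : forall t, is_derive E t (dE t)).
  { intros t. eapply is_derive_eqv. apply is_derive_plus'. apply is_derive_plus'.
    apply is_derive_scal_l, is_derive_mult'; apply Hq. apply is_derive_mult'; apply Hp.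
    apply is_derive_scal_l, is_derive_mult'; apply Hr. subst dE; cbv beta; ring. }
  set (dPhi := fun t => M * dE t + (p t * p t + q t * (- a * q t - c * p t + c * r t))).
  assert (HPh : forall t, is_derive Phi t (dPhi t)).
  { intros t. eapply is_derive_eqv. apply (is_derive_plus' (fun s => M * E s) (fun s => q s * p s)).
    apply is_derive_scal_l, HE. apply is_derive_mult'; [apply Hq|apply Hp]. unfold dPhi. ring. }
  assert (HdEv : forall t, dE t = - 2 * c * (p t * p t) - 2 * w * g * (r t * r t)).
  { intros t. unfold dE. replace (w * (2 * r t * (- d * p t - g * r t))) with (- 2 * (w * d) * (r t * p t) - 2 * w * g * (r t * r t)) by ring.
    rewrite Hwd. ring. }
  assert (Phi_nn : forall t, 0 <= Phi t).
  { intros t. unfold Phi, E. set (x := q t). set (y := p t). set (z := r t).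
    assert (K1 : 0 <= (a * x + y)^2) by apply pow2_ge_0.
    assert (K2 : 0 <= ia * (a * x + y)^2) by (apply Rmult_le_pos; lra).
    assert (K3 : ia * (a * x + y)^2 = a * (x*x) + 2 * (x*y) + ia * (y*y)).
    { replace (ia * (a*x+y)^2) with ((a*ia) * a * (x*x) + 2 * (a*ia) * (x*y) + ia * (y*y)) by ring. rewrite Hia. ring. }
    assert (0 <= x*x) by nra. assert (0 <= y*y) by nra. assert (0 <= z*z) by nra.
    assert (M * (a*(x*x)) >= (1/2) * (a * (x*x))) by nra.
    assert (M * (y*y) >= (1/2) * (ia * (y*y))) by nra.
    assert (0 <= M * (w * (z*z))) by (apply Rmult_le_pos; [lra|nra]). nra. }
  assert (Hdd : forall t, dPhi t <= - (1/2) * E t).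
  { intros t. unfold dPhi, E. rewrite HdEv. set (x := q t). set (y := p t). set (z := r t).
    assert (K1 : 0 <= ia * (a/2 * x + c * y)^2) by (apply Rmult_le_pos; [lra|apply pow2_ge_0]).
    assert (K3 : ia * (a/2 * x + c * y)^2 = a/4 * (x*x) + c * (x*y) + c^2 * ia * (y*y)).
    { replace (ia * (a/2*x+c*y)^2) with ((a*ia) * a/4 * (x*x) + c * (a*ia) * (x*y) + c^2 * ia * (y*y)) by field. rewrite Hia. field. }
    assert (K4 : 0 <= ia * (a/2 * x - c * z)^2) by (apply Rmult_le_pos; [lra|apply pow2_ge_0]).
    assert (K5 : ia * (a/2 * x - c * z)^2 = a/4 * (x*x) - c * (x*z) + c^2 * ia * (z*z)).
    { replace (ia * (a/2*x-c*z)^2) with ((a*ia) * a/4 * (x*x) - c * (a*ia) * (x*z) + c^2 * ia * (z*z)) by field. rewrite Hia. field. }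
    assert (0 <= y*y) by nra. assert (0 <= z*z) by nra.
    assert (2 * c * M * (y*y) >= (3/2 + c^2*ia) * (y*y)) by nra.
    assert (2 * w * g * M * (z*z) >= (c^2*ia + w/2) * (z*z)) by nra. nra. }
  assert (HEd : forall t, dE t <= 0).
  { intros t. rewrite HdEv. assert (0 <= p t * p t) by nra. assert (0 <= r t * r t) by nra.
    assert (0 <= w * g * (r t * r t)) by (apply Rmult_le_pos; [nra|lra]). nra. }
  pose proof (decay_from_lyap E Phi dE dPhi (1/2) ltac:(lra) HE HPh HEd Hdd Phi_nn) as Hdec.
  exists ((ia + 1 + iw) * (Phi 0 / (1/2))). intros t Ht. specialize (Hdec t Ht).
  unfold E in Hdec. assert (0 <= Phi 0) by apply Phi_nn.
  set (B := Phi 0 / (1/2) / t) in *.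
  assert (Hq2 : q t ^ 2 = ia * (a * (q t * q t))).
  { replace (ia * (a * (q t * q t))) with ((a * ia) * (q t * q t)) by ring. rewrite Hia. ring. }
  assert (Hr2 : r t ^ 2 = iw * (w * (r t * r t))).
  { replace (iw * (w * (r t * r t))) with ((w * iw) * (r t * r t)) by ring. rewrite Hiw. ring. }
  assert (0 <= a * (q t * q t)) by nra. assert (0 <= p t * p t) by nra. assert (0 <= w * (r t * r t)) by nra.
  replace ((ia + 1 + iw) * (Phi 0 / (1 / 2)) / t) with ((ia + 1 + iw) * B) by (unfold B; field; lra).
  assert (ia * (a * (q t * q t)) <= ia * B) by nra.
  assert (iw * (w * (r t * r t)) <= iw * B) by nra.
  assert (p t * p t <= B) by nra. nra.
Qed.

Definition quad3 v11 v12 v13 v22 v23 v33 (x y z : R) :=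
  v11 * (x*x) + 2 * v12 * (x*y) + 2 * v13 * (x*z) + v22 * (y*y) + 2 * v23 * (y*z) + v33 * (z*z).

Lemma quad3_deriv v11 v12 v13 v22 v23 v33 (q p r : R -> R) dq dp dr t :
  is_derive q t dq -> is_derive p t dp -> is_derive r t dr ->
  is_derive (fun s => quad3 v11 v12 v13 v22 v23 v33 (q s) (p s) (r s)) t
    (v11 * (2 * q t * dq) + 2 * v12 * (dq * p t + q t * dp) + 2 * v13 * (dq * r t + q t * dr)
     + v22 * (2 * p t * dp) + 2 * v23 * (dp * r t + p t * dr) + v33 * (2 * r t * dr)).
Proof.
  intros Hq Hp Hr. unfold quad3.
  pose proof (is_derive_scal_l v11 _ _ t (is_derive_mult' q q dq dq t Hq Hq)) as D1.
  pose proof (is_derive_scal_l (2*v12) _ _ t (is_derive_mult' q p dq dp t Hq Hp)) as D2.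
  pose proof (is_derive_scal_l (2*v13) _ _ t (is_derive_mult' q r dq dr t Hq Hr)) as D3.
  pose proof (is_derive_scal_l v22 _ _ t (is_derive_mult' p p dp dp t Hp Hp)) as D4.
  pose proof (is_derive_scal_l (2*v23) _ _ t (is_derive_mult' p r dp dr t Hp Hr)) as D5.
  pose proof (is_derive_scal_l v33 _ _ t (is_derive_mult' r r dr dr t Hr Hr)) as D6.
  pose proof (is_derive_plus' _ _ _ _ t (is_derive_plus' _ _ _ _ t (is_derive_plus' _ _ _ _ t
     (is_derive_plus' _ _ _ _ t (is_derive_plus' _ _ _ _ t D1 D2) D3) D4) D5) D6) as D.
  eapply is_derive_eqv; [exact D|]. ring.
Qed.

Lemma quad3_bound v11 v12 v13 v22 v23 v33 x y z :
  Rabs (quad3 v11 v12 v13 v22 v23 v33 x y z) <=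
  (Rabs v11 + Rabs v12 + Rabs v13 + Rabs v22 + Rabs v23 + Rabs v33) * 2 * (x^2 + y^2 + z^2).
Proof.
  unfold quad3. set (SS := x^2 + y^2 + z^2).
  assert (AM : forall u w, Rabs (u * w) <= u^2 + w^2).
  { intros u w. rewrite Rabs_mult. assert (0 <= (Rabs u - Rabs w)^2) by apply pow2_ge_0.
    rewrite <- (pow2_abs u), <- (pow2_abs w). pose proof (Rabs_pos u). pose proof (Rabs_pos w).
    assert (0 <= Rabs u * Rabs w) by (apply Rmult_le_pos; auto).
    replace ((Rabs u - Rabs w)^2) with (Rabs u ^2 + Rabs w ^2 - 2 * (Rabs u * Rabs w)) in H by ring. lra. }
  assert (T : forall v u w, u^2 + w^2 <= 2 * SS -> Rabs (v * (u * w)) <= Rabs v * 2 * SS).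
  { intros v u w Huw. rewrite Rabs_mult, Rmult_assoc. apply Rmult_le_compat_l; [apply Rabs_pos|].
    eapply Rle_trans; [apply AM|exact Huw]. }
  assert (T2 : forall v u w, u^2 + w^2 <= SS -> Rabs (2 * v * (u * w)) <= Rabs v * 2 * SS).
  { intros v u w Huw. replace (2 * v * (u * w)) with (2 * (v * (u * w))) by ring.
    rewrite Rabs_mult, (Rabs_right 2) by lra. rewrite Rabs_mult.
    assert (Rabs (u*w) <= SS) by (eapply Rle_trans; [apply AM|exact Huw]).
    pose proof (Rabs_pos v). pose proof (Rabs_pos (u*w)).
    replace (Rabs v * 2 * SS) with (2 * (Rabs v * SS)) by ring.
    apply Rmult_le_compat_l; [lra|]. apply Rmult_le_compat_l; auto. }
  pose proof (pow2_ge_0 x). pose proof (pow2_ge_0 y). pose proof (pow2_ge_0 z).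
  pose proof (T v11 x x ltac:(unfold SS; lra)). pose proof (T2 v12 x y ltac:(unfold SS; lra)).
  pose proof (T2 v13 x z ltac:(unfold SS; lra)). pose proof (T v22 y y ltac:(unfold SS; lra)).
  pose proof (T2 v23 y z ltac:(unfold SS; lra)). pose proof (T v33 z z ltac:(unfold SS; lra)).
  set (a1 := v11 * (x*x)) in *. set (a2 := 2 * v12 * (x*y)) in *. set (a3 := 2 * v13 * (x*z)) in *.
  set (a4 := v22 * (y*y)) in *. set (a5 := 2 * v23 * (y*z)) in *. set (a6 := v33 * (z*z)) in *.
  pose proof (Rabs_triang (a1+a2+a3+a4+a5) a6). pose proof (Rabs_triang (a1+a2+a3+a4) a5).
  pose proof (Rabs_triang (a1+a2+a3) a4). pose proof (Rabs_triang (a1+a2) a3). pose proof (Rabs_triang a1 a2).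
  replace ((Rabs v11 + Rabs v12 + Rabs v13 + Rabs v22 + Rabs v23 + Rabs v33) * 2 * SS) with
    (Rabs v11 * 2 * SS + Rabs v12 * 2 * SS + Rabs v13 * 2 * SS + Rabs v22 * 2 * SS + Rabs v23 * 2 * SS + Rabs v33 * 2 * SS) by ring.
  clear T T2 AM. lra.
Qed.

Definition sv12 a (l : R) := l / (2 * a).
Definition sv22 a c l := sv12 a l / c.
Definition sv11 a c l := c * sv12 a l + a * sv22 a c l.

Lemma rsum_decay_single (W : R -> R) (B : R -> R) C K :
  (forall t, Rabs (W t) <= C * B t) -> 0 <= C -> (forall t, 0 < t -> B t <= K / t) ->
  forall t, 0 < t -> Rabs (W t) <= (C * K) / t.
Proof.
  intros H1 H2 H3 t Ht. eapply Rle_trans; [apply H1|]. specialize (H3 t Ht).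
  replace (C * K / t) with (C * (K / t)) by (field; lra). apply Rmult_le_compat_l; auto.
Qed.

Lemma std_int (a c l : R) (q p : R -> R) : 0 < a -> 0 < c ->
  (forall t, is_derive q t (p t)) -> (forall t, is_derive p t (- a * q t - c * p t)) ->
  (forall t, is_derive (fun s => quad3 (sv11 a c l) (sv12 a l) 0 (sv22 a c l) 0 0 (q s) (p s) 0) t (- l * q t ^ 2))
  /\ exists K, forall t, 0 < t -> Rabs (quad3 (sv11 a c l) (sv12 a l) 0 (sv22 a c l) 0 0 (q t) (p t) 0) <= K / t.
Proof.
  intros Ha Hc Hq Hp. split.
  - intros t. eapply is_derive_eqv.
    + apply (quad3_deriv _ _ _ _ _ _ q p (fun _ => 0) _ _ 0 t (Hq t) (Hp t) (is_derive_const 0 t)).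
    + unfold sv11, sv22, sv12. field. lra.
  - destruct (std_mode a c q p Ha Hc Hq Hp) as [K HK].
    set (C := (Rabs (sv11 a c l) + Rabs (sv12 a l) + Rabs 0 + Rabs (sv22 a c l) + Rabs 0 + Rabs 0) * 2).
    exists (C * K). apply (rsum_decay_single _ (fun t => q t ^ 2 + p t ^ 2)).
    + intros t. eapply Rle_trans; [apply quad3_bound|]. unfold C. right. simpl. ring.
    + unfold C. pose proof (Rabs_pos (sv11 a c l)). pose proof (Rabs_pos (sv12 a l)). pose proof (Rabs_pos (sv22 a c l)).
      rewrite Rabs_R0. lra.
    + exact HK.
Qed.

Definition dv12 a (l : R) := l / (2 * a).
Definition dden a c d g := a + g * d + g * (c + g) + d * c.
Definition dv23 a c d g l := dv12 a l * (c + g) / dden a c d g.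
Definition dv22 a c d g l := (dv12 a l - d * dv23 a c d g l) / c.
Definition dv13 a c d g l := (c * dv12 a l - a * dv23 a c d g l) / g.
Definition dv33 a c d g l := c * dv23 a c d g l / g.
Definition dv11 a c d g l := c * dv12 a l + d * dv13 a c d g l + a * dv22 a c d g l.

Lemma dapi_int (a c d g l : R) (q p r : R -> R) : 0 < a -> 0 < c -> 0 < d -> 0 < g ->
  (forall t, is_derive q t (p t)) -> (forall t, is_derive p t (- a * q t - c * p t + c * r t)) ->
  (forall t, is_derive r t (- d * p t - g * r t)) ->
  (forall t, is_derive (fun s => quad3 (dv11 a c d g l) (dv12 a l) (dv13 a c d g l) (dv22 a c d g l) (dv23 a c d g l) (dv33 a c d g l) (q s) (p s) (r s)) t (- l * q t ^ 2))
  /\ exists K, forall t, 0 < t -> Rabs (quad3 (dv11 a c d g l) (dv12 a l) (dv13 a c d g l) (dv22 a c d g l) (dv23 a c d g l) (dv33 a c d g l) (q t) (p t) (r t)) <= K / t.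
Proof.
  intros Ha Hc Hd Hg Hq Hp Hr. split.
  - intros t. eapply is_derive_eqv.
    + apply (quad3_deriv _ _ _ _ _ _ q p r _ _ _ t (Hq t) (Hp t) (Hr t)).
    + assert (dden a c d g <> 0). { unfold dden. nra. }
      unfold dv11, dv13, dv33, dv22, dv23, dv12. unfold dden in *. field. repeat split; lra.
  - destruct (dapi_mode a c d g q p r Ha Hc Hd Hg Hq Hp Hr) as [K HK].
    set (C := (Rabs (dv11 a c d g l) + Rabs (dv12 a l) + Rabs (dv13 a c d g l) + Rabs (dv22 a c d g l) + Rabs (dv23 a c d g l) + Rabs (dv33 a c d g l)) * 2).
    exists (C * K). apply (rsum_decay_single _ (fun t => q t ^ 2 + p t ^ 2 + r t ^ 2)).
    + intros t. apply quad3_bound.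
    + unfold C. pose proof (Rabs_pos (dv11 a c d g l)). pose proof (Rabs_pos (dv12 a l)). pose proof (Rabs_pos (dv13 a c d g l)).
      pose proof (Rabs_pos (dv22 a c d g l)). pose proof (Rabs_pos (dv23 a c d g l)). pose proof (Rabs_pos (dv33 a c d g l)). lra.
    + exact HK.
Qed.

Lemma blk_idx N b m : (m < N)%nat -> Nat.div (b * N + m)%nat N = b /\ Nat.modulo (b * N + m)%nat N = m.
Proof.
  intros Hm. split.
  - symmetry. apply (Nat.div_unique _ _ _ m); [lia|lia].
  - symmetry. apply (Nat.mod_unique _ _ b); [lia|lia].
Qed.

Lemma blk_entry N F b1 b2 i j : (i < N)%nat -> (j < N)%nat ->
  blk N F (b1 * N + i)%nat (b2 * N + j)%nat = F b1 b2 i j.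
Proof. intros Hi Hj. unfold blk. destruct (blk_idx N b1 i Hi) as [-> ->]. destruct (blk_idx N b2 j Hj) as [-> ->]. reflexivity. Qed.

Lemma blk_entry0 N F b1 i j : (i < N)%nat -> (j < N)%nat ->
  blk N F (b1 * N + i)%nat j = F b1 0%nat i j.
Proof. intros Hi Hj. rewrite <- (blk_entry N F b1 0 i j Hi Hj). reflexivity. Qed.

Lemma blk_row0 N F b2 i j : (i < N)%nat -> (j < N)%nat ->
  blk N F i (b2 * N + j)%nat = F 0%nat b2 i j.
Proof. intros Hi Hj. rewrite <- (blk_entry N F 0 b2 i j Hi Hj). reflexivity. Qed.

Lemma rsum_blocks s N f : rsum (s * N) f = rsum s (fun b => rsum N (fun m => f (b * N + m)%nat)).
Proof.
  induction s; simpl; auto. replace (N + s * N)%nat with (s * N + N)%nat by lia.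
  rewrite rsum_add, IHs. reflexivity.
Qed.

Definition co n A B U N (r b nn : nat) t := rsum N (fun m => U m nn * X n A B r t (b * N + m)%nat).

Lemma co_deriv s N FA B U r b nn t : (b < s)%nat ->
  is_derive (fun u => co (s * N) (blk N FA) B U N r b nn u) t
    (rsum N (fun m => U m nn * rsum s (fun b' => rsum N (fun j => FA b b' m j * X (s * N) (blk N FA) B r t (b' * N + j)%nat)))).
Proof.
  intros Hb. unfold co. apply is_derive_rsum. intros m Hm.
  apply is_derive_scal_l. eapply is_derive_eqv.
  - apply X_deriv. nia.
  - rewrite rsum_blocks. apply rsum_ext; intros b' Hb'. apply rsum_ext; intros j Hj.
    rewrite blk_entry; auto.
Qed.

Lemma co_0 s N FA FB U r b nn : (b < s)%nat -> (r < N)%nat ->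
  co (s * N) FA (blk N FB) U N r b nn 0 = rsum N (fun m => U m nn * FB b 0%nat m r).
Proof.
  intros Hb Hr. unfold co. apply rsum_ext; intros m Hm. rewrite X_0 by nia. rewrite blk_entry0; auto.
Qed.

Lemma out_row s N A B FC r i t : (0 < s)%nat -> (i < N)%nat ->
  rsum (s * N) (fun mm => blk N FC i mm * X (s * N) A B r t mm) =
  rsum s (fun b => rsum N (fun j => FC 0%nat b i j * X (s * N) A B r t (b * N + j)%nat)).
Proof.
  intros Hs Hi. rewrite rsum_blocks. apply rsum_ext; intros b Hb. apply rsum_ext; intros j Hj.
  rewrite blk_row0; auto.
Qed.

Lemma std_q_deriv N m tau L B U r nn t :
  is_derive (fun u => co (2*N) (A_std N m tau L) B U N r 0 nn u) t (co (2*N) (A_std N m tau L) B U N r 1 nn t).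
Proof.
  unfold A_std. eapply is_derive_eqv. apply (co_deriv 2 N). lia.
  unfold co. apply rsum_ext; intros m' Hm. f_equal. cbn [rsum].
  rewrite (rsum_zero N (fun j => mzero m' j * _)) by (intros; unfold mzero; ring).
  rewrite rsum_mid_l by auto. ring.
Qed.

Lemma std_p_deriv N m tau L B U lam r nn t :
  meq N N (mmul N (mtr U) U) mid -> meq N N L (mmul N (mmul N U (mdiag lam)) (mtr U)) -> (nn < N)%nat ->
  is_derive (fun u => co (2*N) (A_std N m tau L) B U N r 1 nn u) t
    (- (m / tau * lam nn) * co (2*N) (A_std N m tau L) B U N r 0 nn t - 1 / tau * co (2*N) (A_std N m tau L) B U N r 1 nn t).
Proof.
  intros HU HL Hnn.
  unfold A_std. eapply is_derive_eqv. apply (co_deriv 2 N). lia.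
  set (Xf := X (2*N) _ B r t).
  unfold co. fold Xf.
  rewrite (rsum_ext N _ (fun m' => -(m/tau) * (U m' nn * rsum N (fun j => L m' j * Xf (0 * N + j)%nat)) + -(1/tau) * (U m' nn * Xf (1 * N + m')%nat))).
  2:{ intros m' Hm. cbn [rsum]. unfold mscale.
      rewrite (rsum_ext N (fun j => - (m / tau) * L m' j * _) (fun j => - (m/tau) * (L m' j * Xf (0 * N + j)%nat))) by (intros; ring).
      rewrite (rsum_ext N (fun j => - (1 / tau) * mid m' j * _) (fun j => - (1/tau) * (mid m' j * Xf (1 * N + j)%nat))) by (intros; ring).
      rewrite !rsum_scal_l. rewrite rsum_mid_l by auto. ring. }
  rewrite rsum_plus, !rsum_scal_l.
  rewrite (modal N U lam L nn (fun j => Xf (0 * N + j)%nat) HU HL Hnn). ring.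
Qed.

Lemma dapi_q_deriv N m tau k L LC B U r nn t :
  is_derive (fun u => co (3*N) (A_dapi N m tau k L LC) B U N r 0 nn u) t (co (3*N) (A_dapi N m tau k L LC) B U N r 1 nn t).
Proof.
  unfold A_dapi. eapply is_derive_eqv. apply (co_deriv 3 N). lia.
  unfold co. apply rsum_ext; intros m' Hm. f_equal. cbn [rsum].
  rewrite (rsum_zero N (fun j => mzero m' j * _)) by (intros; unfold mzero; ring).
  rewrite (rsum_zero N (fun j => mzero m' j * _)) by (intros; unfold mzero; ring).
  rewrite rsum_mid_l by auto. ring.
Qed.

Lemma dapi_p_deriv N m tau k L LC B U lam r nn t :
  meq N N (mmul N (mtr U) U) mid -> meq N N L (mmul N (mmul N U (mdiag lam)) (mtr U)) -> (nn < N)%nat ->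
  is_derive (fun u => co (3*N) (A_dapi N m tau k L LC) B U N r 1 nn u) t
    (- (m / tau * lam nn) * co (3*N) (A_dapi N m tau k L LC) B U N r 0 nn t
     - 1 / tau * co (3*N) (A_dapi N m tau k L LC) B U N r 1 nn t
     + 1 / tau * co (3*N) (A_dapi N m tau k L LC) B U N r 2 nn t).
Proof.
  intros HU HL Hnn.
  unfold A_dapi. eapply is_derive_eqv. apply (co_deriv 3 N). lia.
  set (Xf := X (3*N) _ B r t).
  unfold co. fold Xf.
  rewrite (rsum_ext N _ (fun m' => -(m/tau) * (U m' nn * rsum N (fun j => L m' j * Xf (0 * N + j)%nat)) + -(1/tau) * (U m' nn * Xf (1 * N + m')%nat) + (1/tau) * (U m' nn * Xf (2 * N + m')%nat))).
  2:{ intros m' Hm. cbn [rsum]. unfold mscale.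
      rewrite (rsum_ext N (fun j => - (m / tau) * L m' j * _) (fun j => - (m/tau) * (L m' j * Xf (0 * N + j)%nat))) by (intros; ring).
      rewrite (rsum_ext N (fun j => - (1 / tau) * mid m' j * _) (fun j => - (1/tau) * (mid m' j * Xf (1 * N + j)%nat))) by (intros; ring).
      rewrite (rsum_ext N (fun j => (1 / tau) * mid m' j * _) (fun j => (1/tau) * (mid m' j * Xf (2 * N + j)%nat))) by (intros; ring).
      rewrite !rsum_scal_l. rewrite !rsum_mid_l by auto. ring. }
  rewrite !rsum_plus, !rsum_scal_l.
  rewrite (modal N U lam L nn (fun j => Xf (0 * N + j)%nat) HU HL Hnn). ring.
Qed.

Lemma dapi_r_deriv N m tau k gamma L B U lam r nn t :
  meq N N (mmul N (mtr U) U) mid -> meq N N L (mmul N (mmul N U (mdiag lam)) (mtr U)) -> (nn < N)%nat ->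
  is_derive (fun u => co (3*N) (A_dapi N m tau k L (mscale gamma L)) B U N r 2 nn u) t
    (- (1 / k) * co (3*N) (A_dapi N m tau k L (mscale gamma L)) B U N r 1 nn t
     - gamma * lam nn / k * co (3*N) (A_dapi N m tau k L (mscale gamma L)) B U N r 2 nn t).
Proof.
  intros HU HL Hnn.
  unfold A_dapi. eapply is_derive_eqv. apply (co_deriv 3 N). lia.
  set (Xf := X (3*N) _ B r t).
  unfold co. fold Xf.
  rewrite (rsum_ext N _ (fun m' => -(1/k) * (U m' nn * Xf (1 * N + m')%nat) + (-(1/k) * gamma) * (U m' nn * rsum N (fun j => L m' j * Xf (2 * N + j)%nat)))).
  2:{ intros m' Hm. cbn [rsum]. unfold mscale.
      rewrite (rsum_zero N (fun j => mzero m' j * _)) by (intros; unfold mzero; ring).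
      rewrite (rsum_ext N (fun j => - (1 / k) * mid m' j * _) (fun j => - (1/k) * (mid m' j * Xf (1 * N + j)%nat))) by (intros; ring).
      rewrite (rsum_ext N (fun j => - (1 / k) * (gamma * L m' j) * _) (fun j => (-(1/k) * gamma) * (L m' j * Xf (2 * N + j)%nat))) by (intros; ring).
      rewrite !rsum_scal_l. rewrite !rsum_mid_l by auto. ring. }
  rewrite !rsum_plus, !rsum_scal_l.
  rewrite (modal N U lam L nn (fun j => Xf (2 * N + j)%nat) HU HL Hnn). unfold Rdiv. ring.
Qed.

Lemma improper_from_antideriv (F G : R -> R) :
  (forall t, is_derive G t (- F t)) -> (forall t, ex_derive F t) ->
  (exists K, forall t, 0 < t -> Rabs (G t) <= K / t) ->
  improper_int_0_inf F (G 0).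
Proof.
  intros HG HF [K HK].
  assert (HI : forall T, is_RInt F 0 T (- G T - - G 0)).
  { intros T. apply (is_RInt_derive (fun s => - G s) F 0 T).
    - intros x _. apply (is_derive_opp G x (- F x)) in HG. eapply is_derive_eqv; [exact HG|]. 
      change (opp (- F x)) with (- - F x). ring.
    - intros x _. exact (@ex_derive_continuous R_AbsRing R_NormedModule F x (HF x)). }
  split.
  - intros T _. exists (ex_RInt_Reals_0 F 0 T (ex_intro _ _ (HI T))). exact I.
  - intros eps Heps. exists (Rabs K / eps + 1). intros T pr HT.
    rewrite <- RInt_Reals. rewrite (is_RInt_unique _ _ _ _ (HI T)).
    assert (0 <= Rabs K / eps) by (unfold Rdiv; apply Rmult_le_pos; [apply Rabs_pos|apply Rlt_le, Rinv_0_lt_compat; lra]).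
    assert (HT0 : 0 < T) by lra.
    replace (- G T - - G 0 - G 0) with (- G T) by ring. rewrite Rabs_Ropp.
    eapply Rle_lt_trans; [apply (HK T HT0)|].
    apply (Rle_lt_trans _ (Rabs K / T)).
    + unfold Rdiv. apply Rmult_le_compat_r; [apply Rlt_le, Rinv_0_lt_compat; lra| apply Rle_abs].
    + apply (Rmult_lt_reg_r T); [lra|]. unfold Rdiv. rewrite Rmult_assoc, Rinv_l by lra.
      assert (Rabs K < eps * T).
      { assert (Rabs K / eps < T) by lra. apply (Rmult_lt_reg_r (/ eps)); [apply Rinv_0_lt_compat; lra|].
        replace (eps * T * / eps) with T by (field; lra). exact H0. }
      lra.
Qed.

Lemma rsum_decay n (f : nat -> R -> R) :
  (forall l, (l < n)%nat -> exists K, forall t, 0 < t -> Rabs (f l t) <= K / t) ->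
  exists K, forall t, 0 < t -> Rabs (rsum n (fun l => f l t)) <= K / t.
Proof.
  induction n; intros H.
  - exists 0. intros t Ht. simpl. rewrite Rabs_R0. unfold Rdiv. lra.
  - destruct IHn as [K1 H1]. { intros; apply H; lia. }
    destruct (H n ltac:(lia)) as [K2 H2]. exists (K1 + K2). intros t Ht. simpl.
    eapply Rle_trans; [apply Rabs_triang|]. specialize (H1 t Ht). specialize (H2 t Ht).
    replace ((K1 + K2) / t) with (K1 / t + K2 / t) by (field; lra). lra.
Qed.

Lemma decay_scal c (f : R -> R) : (exists K, forall t, 0 < t -> Rabs (f t) <= K / t) ->
  exists K, forall t, 0 < t -> Rabs (c * f t) <= K / t.
Proof.
  intros [K HK]. exists (Rabs c * K). intros t Ht. rewrite Rabs_mult.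
  replace (Rabs c * K / t) with (Rabs c * (K / t)) by (field; lra).
  apply Rmult_le_compat_l; [apply Rabs_pos|auto].
Qed.

Lemma ex_derive_rsum n (f : nat -> R -> R) t :
  (forall l, (l < n)%nat -> ex_derive (f l) t) -> ex_derive (fun s => rsum n (fun l => f l s)) t.
Proof.
  intros H. assert (forall l, (l < n)%nat -> is_derive (f l) t (Derive (f l) t)).
  { intros l Hl. apply Derive_correct, H, Hl. }
  eexists. apply is_derive_rsum. exact H0.
Qed.

Lemma rsum_ind_const N c : (1 <= N)%nat -> rsum N (fun nn => if Nat.eqb nn 0 then 0 else c) = c * INR (N - 1).
Proof.
  intros HN. induction N; [lia|]. destruct N.
  - simpl. lra.
  - change (rsum (S (S N)) (fun nn => if Nat.eqb nn 0 then 0 else c)) with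
      (rsum (S N) (fun nn => if Nat.eqb nn 0 then 0 else c) + (if Nat.eqb (S N) 0 then 0 else c)).
    rewrite IHN by lia. replace (S (S N) - 1)%nat with (S (S N - 1)) by lia. rewrite S_INR.
    simpl (Nat.eqb (S N) 0). change (if false then 0 else c) with c. ring.
Qed.

Lemma std_H2 N L U lam m tau alpha :
  (1 <= N)%nat ->
  meq N N (mmul N (mtr U) U) mid -> meq N N L (mmul N (mmul N U (mdiag lam)) (mtr U)) ->
  lam 0%nat = 0 -> (forall nn, (1 <= nn)%nat -> (nn < N)%nat -> 0 < lam nn) ->
  0 < m -> 0 < tau -> 0 < alpha ->
  msym N (msqrt N (mscale alpha L)) ->
  meq N N (mmul N (msqrt N (mscale alpha L)) (msqrt N (mscale alpha L))) (mscale alpha L) ->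
  H2sq_is (2 * N) N N (A_std N m tau L) (B_std N tau) (C_std N (mscale alpha L)) (alpha / (2 * m) * INR (N - 1)).
Proof.
  intros HN HU HL Hl0 Hlp Hm Htau Hal HS HSS.
  set (A := A_std N m tau L). set (B := B_std N tau). set (S := msqrt N (mscale alpha L)).
  set (qf := fun r nn t => co (2*N) A B U N r 0 nn t).
  set (pf := fun r nn t => co (2*N) A B U N r 1 nn t).
  set (Fe := fun t => alpha * rsum N (fun r => rsum N (fun nn => lam nn * (qf r nn t)^2))).
  assert (HF : (fun t => trace N (mmul (2*N) (mmul N (mmul (2*N) (mmul (2*N) (C_std N (mscale alpha L)) (mexp (2*N) A t)) B) (mtr B))
                 (mmul (2*N) (mexp (2*N) (mtr A) t) (mtr (C_std N (mscale alpha L)))))) = Fe).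
  { apply functional_extensionality; intros t. rewrite integrand_eq. unfold Fe.
    rewrite (rsum_ext N _ (fun i => rsum N (fun r => (rsum N (fun j => S i j * X (2*N) A B r t (0 * N + j)%nat))^2))).
    2:{ intros i Hi. apply rsum_ext; intros r Hr. f_equal. unfold C_std. rewrite out_row by (auto; lia).
        cbn [rsum]. rewrite (rsum_zero N (fun j => mzero i j * _)) by (intros; unfold mzero; ring). fold S. ring. }
    rewrite rsum_swap, <- rsum_scal_l. apply rsum_ext; intros r Hr.
    rewrite (out_quad N U lam L S alpha (fun j => X (2*N) A B r t (0 * N + j)%nat) HU HL HS HSS). reflexivity. }
  set (W := fun r nn t => if Nat.eqb nn 0 then 0 else
         quad3 (sv11 (m/tau*lam nn) (1/tau) (lam nn)) (sv12 (m/tau*lam nn) (lam nn)) 0 (sv22 (m/tau*lam nn) (1/tau) (lam nn)) 0 0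
           (qf r nn t) (pf r nn t) 0).
  set (G := fun t => alpha * rsum N (fun r => rsum N (fun nn => W r nn t))).
  assert (Hmode : forall r nn, (nn < N)%nat -> (1 <= nn)%nat ->
     (forall t, is_derive (fun s => quad3 (sv11 (m/tau*lam nn) (1/tau) (lam nn)) (sv12 (m/tau*lam nn) (lam nn)) 0 (sv22 (m/tau*lam nn) (1/tau) (lam nn)) 0 0
           (qf r nn s) (pf r nn s) 0) t (- lam nn * qf r nn t ^ 2)) /\
     exists K, forall t, 0 < t -> Rabs (quad3 (sv11 (m/tau*lam nn) (1/tau) (lam nn)) (sv12 (m/tau*lam nn) (lam nn)) 0 (sv22 (m/tau*lam nn) (1/tau) (lam nn)) 0 0
           (qf r nn t) (pf r nn t) 0) <= K / t).
  { intros r nn Hnn H1. apply std_int.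
    - pose proof (Hlp nn H1 Hnn). apply Rmult_lt_0_compat; [apply Rdiv_lt_0_compat|]; lra.
    - apply Rdiv_lt_0_compat; lra.
    - intros t. apply std_q_deriv.
    - intros t. apply (std_p_deriv N m tau L B U lam r nn t HU HL Hnn). }
  assert (HGd : forall t, is_derive G t (- Fe t)).
  { intros t. unfold G, Fe. eapply is_derive_eqv.
    - apply is_derive_scal_l.
      apply (is_derive_rsum N _ (fun r => rsum N (fun nn => if Nat.eqb nn 0 then 0 else - lam nn * qf r nn t ^ 2))).
      intros r Hr. apply (is_derive_rsum N _ (fun nn => if Nat.eqb nn 0 then 0 else - lam nn * qf r nn t ^ 2)).
      intros nn Hnn. unfold W. destruct (Nat.eqb_spec nn 0) as [->|Hne].
      + apply (is_derive_const 0 t).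
      + apply (proj1 (Hmode r nn Hnn ltac:(lia))).
    - rewrite Ropp_mult_distr_r, <- rsum_opp. f_equal. apply rsum_ext; intros r Hr.
      rewrite <- rsum_opp. apply rsum_ext; intros nn Hnn.
      destruct (Nat.eqb_spec nn 0) as [->|Hne]; [rewrite Hl0; ring | ring]. }
  assert (HFd : forall t, ex_derive Fe t).
  { intros t. unfold Fe. apply ex_derive_scal. apply ex_derive_rsum; intros r Hr. apply ex_derive_rsum; intros nn Hnn.
    apply ex_derive_scal. apply ex_derive_pow. exists (pf r nn t). apply std_q_deriv. }
  assert (HGK : exists K, forall t, 0 < t -> Rabs (G t) <= K / t).
  { unfold G. apply decay_scal. apply rsum_decay; intros r Hr. apply rsum_decay; intros nn Hnn.
    unfold W. destruct (Nat.eqb_spec nn 0) as [->|Hne].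
    - exists 0. intros t Ht. rewrite Rabs_R0. unfold Rdiv. lra.
    - apply (proj2 (Hmode r nn Hnn ltac:(lia))). }
  pose proof (improper_from_antideriv Fe G HGd HFd HGK) as Himp.
  unfold H2sq_is. fold A B. rewrite HF.
  replace (alpha / (2 * m) * INR (N - 1)) with (G 0); [exact Himp|].
  assert (Hq0 : forall r nn, (r < N)%nat -> qf r nn 0 = 0).
  { intros r nn Hr. unfold qf, B, B_std. rewrite (co_0 2 N) by (auto; lia). cbn.
    apply rsum_zero; intros; unfold mzero; ring. }
  assert (Hp0 : forall r nn, (r < N)%nat -> pf r nn 0 = U r nn / tau).
  { intros r nn Hr. unfold pf, B, B_std. rewrite (co_0 2 N) by (auto; lia). cbn. unfold mscale.
    rewrite (rsum_ext N _ (fun m' => (1 / tau) * (U m' nn * mid m' r))) by (intros; ring).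
    rewrite rsum_scal_l, (rsum_mid_r N r (fun m' => U m' nn)) by auto. unfold Rdiv. ring. }
  unfold G. replace (alpha / (2 * m) * INR (N - 1)) with (alpha * (1 / (2 * m) * INR (N - 1))) by (field; lra).
  rewrite <- (rsum_ind_const N (1 / (2 * m))) by auto. f_equal.
  rewrite (rsum_ext N (fun r => rsum N (fun nn => W r nn 0)) (fun r => rsum N (fun nn => if Nat.eqb nn 0 then 0 else 1 / (2 * m) * (U r nn * U r nn)))).
  2:{ intros r Hr. apply rsum_ext; intros nn Hnn. unfold W. destruct (Nat.eqb_spec nn 0) as [->|Hne]; [reflexivity|].
      rewrite Hq0, Hp0 by auto. unfold quad3, sv22, sv12. pose proof (Hlp nn ltac:(lia) Hnn). field. lra. }
  rewrite rsum_swap. apply rsum_ext; intros nn Hnn. destruct (Nat.eqb_spec nn 0) as [->|Hne].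
  - apply rsum_zero; auto.
  - rewrite rsum_scal_l. rewrite (UtU N U nn nn HU Hnn Hnn). unfold mid. rewrite Nat.eqb_refl. ring.
Qed.

Definition dval m tau k gamma l := 1 / (1 + (gamma * tau * l + k) / (gamma * l * (gamma * tau * l + k) + k ^ 2 * m * l)).

Lemma dapi_H2 N L U lam m tau k alpha gamma :
  (1 <= N)%nat ->
  meq N N (mmul N (mtr U) U) mid -> meq N N L (mmul N (mmul N U (mdiag lam)) (mtr U)) ->
  lam 0%nat = 0 -> (forall nn, (1 <= nn)%nat -> (nn < N)%nat -> 0 < lam nn) ->
  0 < m -> 0 < tau -> 0 < k -> 0 < alpha -> 0 < gamma ->
  msym N (msqrt N (mscale alpha L)) ->
  meq N N (mmul N (msqrt N (mscale alpha L)) (msqrt N (mscale alpha L))) (mscale alpha L) ->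
  H2sq_is (3 * N) N N (A_dapi N m tau k L (mscale gamma L)) (B_dapi N tau) (C_dapi N (mscale alpha L))
          (alpha / (2 * m) *
             rsum N (fun n => if Nat.eqb n 0 then 0 else
               1 / (1 + (gamma * tau * lam n + k) /
                        (gamma * lam n * (gamma * tau * lam n + k)
                         + k ^ 2 * m * lam n)))).
Proof.
  intros HN HU HL Hl0 Hlp Hm Htau Hk Hal Hg HS HSS.
  set (A := A_dapi N m tau k L (mscale gamma L)). set (B := B_dapi N tau). set (S := msqrt N (mscale alpha L)).
  set (qf := fun r nn t => co (3*N) A B U N r 0 nn t).
  set (pf := fun r nn t => co (3*N) A B U N r 1 nn t).
  set (rf := fun r nn t => co (3*N) A B U N r 2 nn t).
  set (Fe := fun t => alpha * rsum N (fun r => rsum N (fun nn => lam nn * (qf r nn t)^2))).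
  assert (HF : (fun t => trace N (mmul (3*N) (mmul N (mmul (3*N) (mmul (3*N) (C_dapi N (mscale alpha L)) (mexp (3*N) A t)) B) (mtr B))
                 (mmul (3*N) (mexp (3*N) (mtr A) t) (mtr (C_dapi N (mscale alpha L)))))) = Fe).
  { apply functional_extensionality; intros t. rewrite integrand_eq. unfold Fe.
    rewrite (rsum_ext N _ (fun i => rsum N (fun r => (rsum N (fun j => S i j * X (3*N) A B r t (0 * N + j)%nat))^2))).
    2:{ intros i Hi. apply rsum_ext; intros r Hr. f_equal. unfold C_dapi. rewrite out_row by (auto; lia).
        cbn [rsum]. rewrite !(rsum_zero N (fun j => mzero i j * _)) by (intros; unfold mzero; ring). fold S. ring. }
    rewrite rsum_swap, <- rsum_scal_l. apply rsum_ext; intros r Hr.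
    rewrite (out_quad N U lam L S alpha (fun j => X (3*N) A B r t (0 * N + j)%nat) HU HL HS HSS). reflexivity. }
  set (aa := fun nn => m / tau * lam nn). set (cc := 1 / tau). set (dd := 1 / k). set (gg := fun nn => gamma * lam nn / k).
  set (W := fun r nn t => if Nat.eqb nn 0 then 0 else
         quad3 (dv11 (aa nn) cc dd (gg nn) (lam nn)) (dv12 (aa nn) (lam nn)) (dv13 (aa nn) cc dd (gg nn) (lam nn))
               (dv22 (aa nn) cc dd (gg nn) (lam nn)) (dv23 (aa nn) cc dd (gg nn) (lam nn)) (dv33 (aa nn) cc dd (gg nn) (lam nn))
           (qf r nn t) (pf r nn t) (rf r nn t)).
  set (G := fun t => alpha * rsum N (fun r => rsum N (fun nn => W r nn t))).
  assert (Hmode : forall r nn, (nn < N)%nat -> (1 <= nn)%nat ->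
     (forall t, is_derive (fun s => quad3 (dv11 (aa nn) cc dd (gg nn) (lam nn)) (dv12 (aa nn) (lam nn)) (dv13 (aa nn) cc dd (gg nn) (lam nn))
               (dv22 (aa nn) cc dd (gg nn) (lam nn)) (dv23 (aa nn) cc dd (gg nn) (lam nn)) (dv33 (aa nn) cc dd (gg nn) (lam nn))
           (qf r nn s) (pf r nn s) (rf r nn s)) t (- lam nn * qf r nn t ^ 2)) /\
     exists K, forall t, 0 < t -> Rabs (quad3 (dv11 (aa nn) cc dd (gg nn) (lam nn)) (dv12 (aa nn) (lam nn)) (dv13 (aa nn) cc dd (gg nn) (lam nn))
               (dv22 (aa nn) cc dd (gg nn) (lam nn)) (dv23 (aa nn) cc dd (gg nn) (lam nn)) (dv33 (aa nn) cc dd (gg nn) (lam nn))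
           (qf r nn t) (pf r nn t) (rf r nn t)) <= K / t).
  { intros r nn Hnn H1. pose proof (Hlp nn H1 Hnn). apply dapi_int.
    - unfold aa. apply Rmult_lt_0_compat; [apply Rdiv_lt_0_compat|]; lra.
    - unfold cc. apply Rdiv_lt_0_compat; lra.
    - unfold dd. apply Rdiv_lt_0_compat; lra.
    - unfold gg. apply Rdiv_lt_0_compat; [apply Rmult_lt_0_compat|]; lra.
    - intros t. apply dapi_q_deriv.
    - intros t. apply (dapi_p_deriv N m tau k L (mscale gamma L) B U lam r nn t HU HL Hnn).
    - intros t. apply (dapi_r_deriv N m tau k gamma L B U lam r nn t HU HL Hnn). }
  assert (HGd : forall t, is_derive G t (- Fe t)).
  { intros t. unfold G, Fe. eapply is_derive_eqv.
    - apply is_derive_scal_l.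
      apply (is_derive_rsum N _ (fun r => rsum N (fun nn => if Nat.eqb nn 0 then 0 else - lam nn * qf r nn t ^ 2))).
      intros r Hr. apply (is_derive_rsum N _ (fun nn => if Nat.eqb nn 0 then 0 else - lam nn * qf r nn t ^ 2)).
      intros nn Hnn. unfold W. destruct (Nat.eqb_spec nn 0) as [->|Hne].
      + apply (is_derive_const 0 t).
      + apply (proj1 (Hmode r nn Hnn ltac:(lia))).
    - rewrite Ropp_mult_distr_r, <- rsum_opp. f_equal. apply rsum_ext; intros r Hr.
      rewrite <- rsum_opp. apply rsum_ext; intros nn Hnn.
      destruct (Nat.eqb_spec nn 0) as [->|Hne]; [rewrite Hl0; ring | ring]. }
  assert (HFd : forall t, ex_derive Fe t).
  { intros t. unfold Fe. apply ex_derive_scal. apply ex_derive_rsum; intros r Hr. apply ex_derive_rsum; intros nn Hnn.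
    apply ex_derive_scal. apply ex_derive_pow. exists (pf r nn t). apply dapi_q_deriv. }
  assert (HGK : exists K, forall t, 0 < t -> Rabs (G t) <= K / t).
  { unfold G. apply decay_scal. apply rsum_decay; intros r Hr. apply rsum_decay; intros nn Hnn.
    unfold W. destruct (Nat.eqb_spec nn 0) as [->|Hne].
    - exists 0. intros t Ht. rewrite Rabs_R0. unfold Rdiv. lra.
    - apply (proj2 (Hmode r nn Hnn ltac:(lia))). }
  pose proof (improper_from_antideriv Fe G HGd HFd HGK) as Himp.
  unfold H2sq_is. fold A B. rewrite HF.
  match goal with |- improper_int_0_inf _ ?v => replace v with (G 0); [exact Himp|] end.
  assert (Hq0 : forall r nn, (r < N)%nat -> qf r nn 0 = 0).
  { intros r nn Hr. unfold qf, B, B_dapi. rewrite (co_0 3 N) by (auto; lia). cbn.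
    apply rsum_zero; intros; unfold mzero; ring. }
  assert (Hr0 : forall r nn, (r < N)%nat -> rf r nn 0 = 0).
  { intros r nn Hr. unfold rf, B, B_dapi. rewrite (co_0 3 N) by (auto; lia). cbn.
    apply rsum_zero; intros; unfold mzero; ring. }
  assert (Hp0 : forall r nn, (r < N)%nat -> pf r nn 0 = U r nn / tau).
  { intros r nn Hr. unfold pf, B, B_dapi. rewrite (co_0 3 N) by (auto; lia). cbn. unfold mscale.
    rewrite (rsum_ext N _ (fun m' => (1 / tau) * (U m' nn * mid m' r))) by (intros; ring).
    rewrite rsum_scal_l, (rsum_mid_r N r (fun m' => U m' nn)) by auto. unfold Rdiv. ring. }
  set (val := fun nn => dval m tau k gamma (lam nn)).
  change (rsum N (fun n => if Nat.eqb n 0 then 0 else 1 / (1 + (gamma * tau * lam n + k) / (gamma * lam n * (gamma * tau * lam n + k) + k ^ 2 * m * lam n))))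
    with (rsum N (fun n => if Nat.eqb n 0 then 0 else val n)).
  unfold G. rewrite <- (rsum_scal_l N (alpha / (2 * m))).
  replace (rsum N (fun i => alpha / (2 * m) * (if Nat.eqb i 0 then 0 else val i)))
    with (alpha * rsum N (fun i => if Nat.eqb i 0 then 0 else 1 / (2 * m) * val i)).
  2:{ rewrite <- rsum_scal_l. apply rsum_ext; intros i Hi. destruct (Nat.eqb i 0); [ring|]. field; lra. }
  f_equal.
  rewrite (rsum_ext N (fun r => rsum N (fun nn => W r nn 0)) (fun r => rsum N (fun nn => if Nat.eqb nn 0 then 0 else 1 / (2 * m) * val nn * (U r nn * U r nn)))).
  2:{ intros r Hr. apply rsum_ext; intros nn Hnn. unfold W. destruct (Nat.eqb_spec nn 0) as [->|Hne]; [reflexivity|].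
      rewrite Hq0, Hp0, Hr0 by auto. pose proof (Hlp nn ltac:(lia) Hnn).
      unfold quad3, val, dval, dv22, dv23, dv12, dden, aa, cc, dd, gg.
      assert (0 < gamma * lam nn * (gamma * tau * lam nn + k) + k ^ 2 * m * lam nn).
      { assert (0 < gamma * lam nn) by nra. assert (0 < gamma * tau * lam nn) by (apply Rmult_lt_0_compat; nra).
        assert (0 < k^2 * m * lam nn) by (apply Rmult_lt_0_compat; [apply Rmult_lt_0_compat|]; nra). nra. }
      assert (0 < gamma * tau * lam nn + k) by (assert (0 < gamma * tau * lam nn) by (apply Rmult_lt_0_compat; [apply Rmult_lt_0_compat|]; lra); lra).
      field. repeat split; lra. }
  rewrite rsum_swap. apply rsum_ext; intros nn Hnn. destruct (Nat.eqb_spec nn 0) as [->|Hne].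
  - apply rsum_zero; auto.
  - rewrite rsum_scal_l. rewrite (UtU N U nn nn HU Hnn Hnn). unfold mid. rewrite Nat.eqb_refl. ring.
Qed.

Theorem theorem1 (N : nat) (b : Mat) (lam : nat -> R) (m tau k alpha gamma : R) :
  (2 <= N)%nat ->
  (forall i j, (i < N)%nat -> (j < N)%nat -> b i j = b j i) ->
  (forall i j, (i < N)%nat -> (j < N)%nat -> 0 <= b i j) ->
  connected N b ->
  sym_eigenvalues N (lap N b) lam ->
  lam 0%nat = 0 -> 0 < lam 1%nat ->
  (forall n, (1 <= n)%nat -> (n + 1 < N)%nat -> lam n <= lam (n + 1)%nat) ->
  0 < m -> 0 < tau -> 0 < k -> 0 < alpha -> 0 < gamma ->
  H2sq_is (2 * N) N N (A_std N m tau (lap N b)) (B_std N tau)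
          (C_std N (mscale alpha (lap N b)))
          (alpha / (2 * m) * INR (N - 1))
  /\
  H2sq_is (3 * N) N N
          (A_dapi N m tau k (lap N b) (mscale gamma (lap N b))) (B_dapi N tau)
          (C_dapi N (mscale alpha (lap N b)))
          (alpha / (2 * m) *
             rsum N (fun n => if Nat.eqb n 0 then 0 else
               1 / (1 + (gamma * tau * lam n + k) /
                        (gamma * lam n * (gamma * tau * lam n + k)
                         + k ^ 2 * m * lam n)))).
Proof.
  intros HN _ _ _ [U [HU HL]] Hl0 Hl1 Hsort Hm Htau Hk Hal Hg.
  assert (Hlp : forall nn, (1 <= nn)%nat -> (nn < N)%nat -> 0 < lam nn).
  { intros nn H1. induction nn as [|nn IH]; [lia|]. intros Hn.
    destruct (Nat.eq_dec nn 0) as [->|Hne]; [exact Hl1|].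
    specialize (IH ltac:(lia) ltac:(lia)). pose proof (Hsort nn ltac:(lia) ltac:(lia)).
    replace (S nn) with (nn + 1)%nat by lia. lra. }
  assert (Hnn : forall kk, (kk < N)%nat -> 0 <= lam kk).
  { intros kk Hkk. destruct kk; [lra|]. apply Rlt_le, Hlp; lia. }
  destruct (msqrt_spec N U lam (lap N b) alpha HU HL ltac:(lra) Hnn) as [[HS _] HSS].
  split.
  - apply std_H2 with (U := U) (lam := lam); auto; lia.
  - apply dapi_H2 with (U := U); auto; lia.
Qed.
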